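(* Let $(\mathfrak A,\mathfrak A_0)$ be a quasi *-algebra with unit $e$ and let $\omega$ be a linear functional on $\mathfrak A$ satisfying (L.1) and (L.2). The following statements are equivalent: (i) $\omega$ is representable; (ii) there exist a *-representation $\pi:\mathfrak A\to\mathcal L^\dagger(\mathcal D_\pi,\mathcal H_\pi)$ and a vector $\zeta\in\mathcal D_\pi$ such that $\omega(a)=\langle\pi(a)\zeta,\zeta\rangle$ for all $a\in\mathfrak A$; (iii) there exists a sesquilinear form $\Omega\in\mathcal Q_{\mathfrak A_0}(\mathfrak A)$ such that $\omega(a)=\Omega(a,e)$ for all $a\in\mathfrak A$; (iv) there exists a Hilbert seminorm $p$ on $\mathfrak A$ such that $|\omega(a^*x)|\le p(a)\,\omega(x^*x)^{1/2}$ for all $a\in\mathfrak A$ and $x\in\mathfrak A_0$.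
   Context: A quasi *-algebra $(\mathfrak A,\mathfrak A_0)$ consists of a complex vector space $\mathfrak A$ and a *-algebra $\mathfrak A_0$ which is a linear subspace of $\mathfrak A$, such that: $\mathfrak A$ carries an involution $a\mapsto a^*$ extending that of $\mathfrak A_0$; $\mathfrak A$ is a bimodule over $\mathfrak A_0$ whose module multiplications extend the multiplication of $\mathfrak A_0$, with $(xa)y=x(ay)$ and $a(xy)=(ax)y$ for all $a\in\mathfrak A$, $x,y\in\mathfrak A_0$; and $(ax)^*=x^*a^*$ for all $a\in\mathfrak A$, $x\in\mathfrak A_0$. A unit is an element $e\in\mathfrak A_0$ with $ae=ea=a$ for all $a\in\mathfrak A$. A linear functional $\omega$ on $\mathfrak A$ is representable if (L.1) $\omega(x^*x)\ge0$ for all $x\in\mathfrak A_0$; (L.2) $\omega(y^*a^*x)=\overline{\omega(x^*ay)}$ for all $x,y\in\mathfrak A_0$, $a\in\mathfrak A$; (L.3) for every $a\in\mathfrak A$ there is $\gamma_a>0$ with $|\omega(a^*x)|\le\gamma_a\,\omega(x^*x)^{1/2}$ for all $x\in\mathfrak A_0$. For a dense subspace $\mathcal D$ of a Hilbert space $\mathcal H$, $\mathcal L^\dagger(\mathcal D,\mathcal H)$ is the set of closable operators $X$ in $\mathcal H$ with domain $\mathcal D$ such that $\mathcal D(X^* )\supseteq\mathcal D$; set $X^\dagger=X^*\restriction_{\mathcal D}$. $X$ is a left multiplier of $Y$ if $Y\mathcal D\subseteq\mathcal D(X^{\dagger *})$ and $X^\dagger\mathcal D\subseteq\mathcal D(Y^*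 )$, and then $X\square Y:=X^{\dagger*}Y$. A *-representation of $(\mathfrak A,\mathfrak A_0)$ is a linear map $\pi:\mathfrak A\to\mathcal L^\dagger(\mathcal D_\pi,\mathcal H_\pi)$ ($\mathcal D_\pi$ dense in the Hilbert space $\mathcal H_\pi$) such that $\pi(a^* )=\pi(a)^\dagger$ for all $a$, and for $a\in\mathfrak A$, $x\in\mathfrak A_0$, $\pi(a)$ is a left multiplier of $\pi(x)$ with $\pi(a)\square\pi(x)=\pi(ax)$; if there is a unit $e$, $\pi(e)=I_{\mathcal D_\pi}$. $\mathcal Q_{\mathfrak A_0}(\mathfrak A)$ is the set of sesquilinear forms $\varphi$ on $\mathfrak A\times\mathfrak A$ with $\varphi(a,a)\ge0$ for all $a\in\mathfrak A$ and $\varphi(ax,y)=\varphi(x,a^*y)$ for all $a\in\mathfrak A$, $x,y\in\mathfrak A_0$. A Hilbert seminorm on a vector space $V$ is a seminorm $p$ with $p(a+b)^2+p(a-b)^2=2p(a)^2+2p(b)^2$ for all $a,b\in V$. *)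

(* Defs.v *)
From Stdlib Require Import Reals ClassicalEpsilon.
Open Scope R_scope.
Set Implicit Arguments.

Record Cx := mkC { Re : R; Im : R }.
Definition C0 : Cx := mkC 0 0.
Definition C1 : Cx := mkC 1 0.
Definition Cadd (z w : Cx) : Cx := mkC (Re z + Re w) (Im z + Im w).
Definition Cmul (z w : Cx) : Cx :=
  mkC (Re z * Re w - Im z * Im w) (Re z * Im w + Im z * Re w).
Definition Cconj (z : Cx) : Cx := mkC (Re z) (- Im z).
Definition Cabs (z : Cx) : R := sqrt (Re z * Re z + Im z * Im z).
Definition Cnonneg (z : Cx) : Prop := Im z = 0 /\ 0 <= Re z.

Record CVS := {
  vcar :> Type;
  vadd : vcar -> vcar -> vcar;
  vzero : vcar;
  vopp : vcar -> vcar;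
  vscal : Cx -> vcar -> vcar;
  vaddA : forall u v w, vadd u (vadd v w) = vadd (vadd u v) w;
  vaddC : forall u v, vadd u v = vadd v u;
  vadd0 : forall v, vadd v vzero = v;
  vaddN : forall v, vadd v (vopp v) = vzero;
  vscal1 : forall v, vscal C1 v = v;
  vscalA : forall a b v, vscal a (vscal b v) = vscal (Cmul a b) v;
  vscalDr : forall a u v, vscal a (vadd u v) = vadd (vscal a u) (vscal a v);
  vscalDl : forall a b v, vscal (Cadd a b) v = vadd (vscal a v) (vscal b v)
}.
Arguments vadd {_}. Arguments vzero {_}. Arguments vopp {_}. Arguments vscal {_}.

Definition vsub {V : CVS} (u v : V) : V := vadd u (vopp v).

Definition ipnorm {V : CVS} (ip : V -> V -> Cx) (v : V) : R := sqrt (Re (ip v v)).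
Definition ip_converges {V : CVS} (ip : V -> V -> Cx) (f : nat -> V) (v : V) : Prop :=
  forall eps, 0 < eps -> exists N, forall n, (N <= n)%nat -> ipnorm ip (vsub (f n) v) < eps.
Definition ip_cauchy {V : CVS} (ip : V -> V -> Cx) (f : nat -> V) : Prop :=
  forall eps, 0 < eps -> exists N, forall m n, (N <= m)%nat -> (N <= n)%nat ->
    ipnorm ip (vsub (f m) (f n)) < eps.

Record Hilbert := {
  hV :> CVS;
  inner : hV -> hV -> Cx;
  innerDl : forall u v w, inner (vadd u v) w = Cadd (inner u w) (inner v w);
  innerZl : forall a u w, inner (vscal a u) w = Cmul a (inner u w);
  inner_sym : forall u v, inner v u = Cconj (inner u v);
  inner_pos : forall v, Cnonneg (inner v v);
  inner_def : forall v, inner v v = C0 -> v = vzero;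
  complete : forall f, ip_cauchy inner f -> exists v, ip_converges inner f v
}.
Arguments inner {_}.

(* A single multiplication
   qmul represents both module actions (x a and a x for x in A0), which by
   definition extend the multiplication of A0; it is only constrained when at
   least one argument lies in A0. *)
Record QStarAlg := {
  qV :> CVS;
  inA0 : qV -> Prop;
  qmul : qV -> qV -> qV;
  qstar : qV -> qV;
  A0_zero : inA0 vzero;
  A0_add : forall x y, inA0 x -> inA0 y -> inA0 (vadd x y);
  A0_scal : forall k x, inA0 x -> inA0 (vscal k x);
  A0_mul : forall x y, inA0 x -> inA0 y -> inA0 (qmul x y);
  A0_star : forall x, inA0 x -> inA0 (qstar x);
  qmulDl : forall a b c, (inA0 c \/ (inA0 a /\ inA0 b)) ->
    qmul (vadd a b) c = vadd (qmul a c) (qmul b c);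
  qmulDr : forall a b c, (inA0 a \/ (inA0 b /\ inA0 c)) ->
    qmul a (vadd b c) = vadd (qmul a b) (qmul a c);
  qmulZl : forall k a b, (inA0 a \/ inA0 b) -> qmul (vscal k a) b = vscal k (qmul a b);
  qmulZr : forall k a b, (inA0 a \/ inA0 b) -> qmul a (vscal k b) = vscal k (qmul a b);
  qmulA_xya : forall x y a, inA0 x -> inA0 y -> qmul (qmul x y) a = qmul x (qmul y a);
  qmulA_xay : forall x y a, inA0 x -> inA0 y -> qmul (qmul x a) y = qmul x (qmul a y);
  qmulA_axy : forall x y a, inA0 x -> inA0 y -> qmul a (qmul x y) = qmul (qmul a x) y;
  qstarD : forall a b, qstar (vadd a b) = vadd (qstar a) (qstar b);
  qstarZ : forall k a, qstar (vscal k a) = vscal (Cconj k) (qstar a);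
  qstarK : forall a, qstar (qstar a) = a;
  qstarM : forall a x, inA0 x -> qstar (qmul a x) = qmul (qstar x) (qstar a)
}.
Arguments inA0 {_}. Arguments qmul {_}. Arguments qstar {_}.

Definition is_unit {Q : QStarAlg} (e : Q) : Prop :=
  inA0 e /\ forall a : Q, qmul a e = a /\ qmul e a = a.

Definition lin_functional {Q : QStarAlg} (w : Q -> Cx) : Prop :=
  (forall a b, w (vadd a b) = Cadd (w a) (w b)) /\
  (forall k a, w (vscal k a) = Cmul k (w a)).

Definition L1 {Q : QStarAlg} (w : Q -> Cx) : Prop :=
  forall x : Q, inA0 x -> Cnonneg (w (qmul (qstar x) x)).

Definition L2 {Q : QStarAlg} (w : Q -> Cx) : Prop :=
  forall (x y a : Q), inA0 x -> inA0 y ->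
    w (qmul (qmul (qstar y) (qstar a)) x) = Cconj (w (qmul (qmul (qstar x) a) y)).

Definition L3 {Q : QStarAlg} (w : Q -> Cx) : Prop :=
  forall a : Q, exists gamma, 0 < gamma /\
    forall x : Q, inA0 x ->
      Cabs (w (qmul (qstar a) x)) <= gamma * sqrt (Re (w (qmul (qstar x) x))).

Definition representable {Q : QStarAlg} (w : Q -> Cx) : Prop :=
  lin_functional w /\ L1 w /\ L2 w /\ L3 w.

(* An operator with domain D is a function H -> H whose values off D are
   irrelevant; operators with domain D are equal iff they agree on D. *)
Definition dense_subspace {H : Hilbert} (D : H -> Prop) : Prop :=
  D vzero /\ (forall u v, D u -> D v -> D (vadd u v)) /\
  (forall k u, D u -> D (vscal k u)) /\
  (forall v eps, 0 < eps -> exists d, D d /\ ipnorm inner (vsub v d) < eps).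

Definition lin_on {H : Hilbert} (D : H -> Prop) (X : H -> H) : Prop :=
  (forall u v, D u -> D v -> X (vadd u v) = vadd (X u) (X v)) /\
  (forall k u, D u -> X (vscal k u) = vscal k (X u)).

(* u in D(X^* ) and X^* u = w, for X with domain D *)
Definition is_adj {H : Hilbert} (D : H -> Prop) (X : H -> H) (u w : H) : Prop :=
  forall d, D d -> inner (X d) u = inner d w.

(* the adjoint X^* (its values are meaningful on D(X^* )) *)
Definition adj {H : Hilbert} (D : H -> Prop) (X : H -> H) (u : H) : H :=
  epsilon (inhabits (@vzero H)) (fun w => is_adj D X u w).

(* X^dagger = X^* restricted to D, i.e. adj D X used on D *)
Definition closable {H : Hilbert} (D : H -> Prop) (X : H -> H) : Prop :=
  forall (f : nat -> H) (w : H), (forall n, D (f n)) ->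
    ip_converges inner f vzero -> ip_converges inner (fun n => X (f n)) w -> w = vzero.

Definition in_Ldagger {H : Hilbert} (D : H -> Prop) (X : H -> H) : Prop :=
  lin_on D X /\ closable D X /\ (forall u, D u -> exists w, is_adj D X u w).

(* X is a left multiplier of Y : Y D ⊆ D(X^{dagger *}) and X^dagger D ⊆ D(Y^* ) *)
Definition left_multiplier {H : Hilbert} (D : H -> Prop) (X Y : H -> H) : Prop :=
  (forall d, D d -> exists w, is_adj D (adj D X) (Y d) w) /\
  (forall d, D d -> exists w, is_adj D Y (adj D X d) w).

Definition wprod {H : Hilbert} (D : H -> Prop) (X Y : H -> H) : H -> H :=
  fun v => adj D (adj D X) (Y v).

Definition star_rep {Q : QStarAlg} (e : Q) {H : Hilbert} (D : H -> Prop) (pi : Q -> H -> H)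
  : Prop :=
  dense_subspace D /\
  (forall a, in_Ldagger D (pi a)) /\
  (forall a b d, D d -> pi (vadd a b) d = vadd (pi a d) (pi b d)) /\
  (forall k a d, D d -> pi (vscal k a) d = vscal k (pi a d)) /\
  (forall a d, D d -> pi (qstar a) d = adj D (pi a) d) /\
  (forall a x, inA0 x ->
     left_multiplier D (pi a) (pi x) /\
     forall d, D d -> wprod D (pi a) (pi x) d = pi (qmul a x) d) /\
  (forall d, D d -> pi e d = d).

Definition sesquilinear {Q : QStarAlg} (phi : Q -> Q -> Cx) : Prop :=
  (forall a b c, phi (vadd a b) c = Cadd (phi a c) (phi b c)) /\
  (forall a b c, phi a (vadd b c) = Cadd (phi a b) (phi a c)) /\
  (forall k a b, phi (vscal k a) b = Cmul k (phi a b)) /\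
  (forall k a b, phi a (vscal k b) = Cmul (Cconj k) (phi a b)).

Definition in_QA0 {Q : QStarAlg} (phi : Q -> Q -> Cx) : Prop :=
  sesquilinear phi /\ (forall a, Cnonneg (phi a a)) /\
  (forall (a x y : Q), inA0 x -> inA0 y -> phi (qmul a x) y = phi x (qmul (qstar a) y)).

Definition hilbert_seminorm {V : CVS} (p : V -> R) : Prop :=
  (forall a, 0 <= p a) /\
  (forall a b, p (vadd a b) <= p a + p b) /\
  (forall k a, p (vscal k a) = Cabs k * p a) /\
  (forall a b, (p (vadd a b))^2 + (p (vsub a b))^2 = 2 * (p a)^2 + 2 * (p b)^2).

(* Main.v *)
Require Import Defs.
From Stdlib Require Import Reals.
From Stdlib Require Import Reals Lra Lia Psatz ClassicalEpsilon FunctionalExtensionality ProofIrrelevance Classical.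
Require Import Defs.
Open Scope R_scope.

Lemma Cx_eq (z w : Cx) : Re z = Re w -> Im z = Im w -> z = w.
Proof. destruct z, w; simpl; intros; subst; reflexivity. Qed.

Ltac cxeq := apply Cx_eq; simpl; ring.

Definition Copp (z : Cx) : Cx := mkC (- Re z) (- Im z).
Definition Creal (r : R) : Cx := mkC r 0.

Lemma real_cs (a b1 b2 c : R) : 0 <= a -> 0 <= c ->
  (forall t1 t2, 0 <= a + 2*(t1*b1 + t2*b2) + (t1*t1+t2*t2)*c) ->
  b1*b1+b2*b2 <= a*c.
Proof.
  intros Ha Hc H.
  destruct (Req_dec c 0) as [E|E].
  - subst c. destruct (Req_dec (b1*b1+b2*b2) 0) as [Eb|Eb]; [lra|].
    assert (Hb : 0 < b1*b1+b2*b2) by nra.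
    set (s := - (a+1) / (2*(b1*b1+b2*b2))).
    specialize (H (s*b1) (s*b2)).
    assert (Hs : s * (2*(b1*b1+b2*b2)) = -(a+1)) by (unfold s; field; lra).
    nra.
  - assert (Hc' : 0 < c) by lra.
    specialize (H (-b1/c) (-b2/c)).
    assert (E1 : a + 2 * (- b1 / c * b1 + - b2 / c * b2) + (- b1 / c * (- b1 / c) + - b2 / c * (- b2 / c)) * c
       = a - (b1*b1+b2*b2)/c) by (field; lra).
    rewrite E1 in H.
    assert (E2 : (b1*b1+b2*b2)/c * c = b1*b1+b2*b2) by (field; lra).
    assert (0 <= a*c - (b1*b1+b2*b2)/c*c) by (apply Rmult_le_reg_r with (/c); [apply Rinv_0_lt_compat; lra|];
       replace ((a * c - (b1 * b1 + b2 * b2) / c * c) * / c) with (a - (b1*b1+b2*b2)/c) by (field; lra); lra).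
    lra.
Qed.

Lemma Cabs_le_of_sq (b : Cx) (a c : R) : 0 <= a -> 0 <= c ->
  Re b * Re b + Im b * Im b <= a * c -> Cabs b <= sqrt a * sqrt c.
Proof.
  intros Ha Hc H. unfold Cabs. rewrite <- sqrt_mult by lra.
  apply sqrt_le_1_alt. exact H.
Qed.

Lemma Cabs_conj z : Cabs (Cconj z) = Cabs z.
Proof. unfold Cabs; simpl. f_equal. ring. Qed.

Lemma Cabs_ge0 z : 0 <= Cabs z.
Proof. apply sqrt_pos. Qed.

Arguments vaddA {_}. Arguments vaddC {_}. Arguments vadd0 {_}. Arguments vaddN {_}.
Arguments vscal1 {_}. Arguments vscalA {_}. Arguments vscalDr {_}. Arguments vscalDl {_}.
Arguments innerDl {_}. Arguments innerZl {_}. Arguments inner_sym {_}. Arguments inner_pos {_}.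
Arguments inner_def {_}. Arguments complete {_}.
Arguments A0_zero {_}. Arguments A0_add {_}. Arguments A0_scal {_}. Arguments A0_mul {_}. Arguments A0_star {_}.
Arguments qmulDl {_}. Arguments qmulDr {_}. Arguments qmulZl {_}. Arguments qmulZr {_}.
Arguments qmulA_xya {_}. Arguments qmulA_xay {_}. Arguments qmulA_axy {_}.
Arguments qstarD {_}. Arguments qstarZ {_}. Arguments qstarK {_}. Arguments qstarM {_}.
Section CVSL.
Variable V : CVS.

Lemma vadd_self_zero (x : V) : vadd x x = x -> x = vzero.
Proof.
  intro H. transitivity (vadd (vadd x x) (vopp x)).
  - rewrite <- vaddA, vaddN, vadd0. reflexivity.
  - rewrite H. apply vaddN.
Qed.

Lemma vscal0 (v : V) : vscal C0 v = vzero.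
Proof.
  apply vadd_self_zero. rewrite <- vscalDl. f_equal. cxeq.
Qed.

Lemma vscal_zero k : vscal k (@vzero V) = vzero.
Proof.
  apply vadd_self_zero. rewrite <- vscalDr. rewrite vadd0. reflexivity.
Qed.

Lemma vadd0l (v : V) : vadd vzero v = v.
Proof. rewrite vaddC; apply vadd0. Qed.

Lemma vopp_scal (v : V) : vopp v = vscal (mkC (-1) 0) v.
Proof.
  assert (H : vadd v (vscal (mkC (-1) 0) v) = vzero).
  { rewrite <- (vscal1 v) at 1. rewrite <- vscalDl.
    replace (Cadd C1 (mkC (-1) 0)) with C0 by cxeq. apply vscal0. }
  rewrite <- (vadd0 (vopp v)). rewrite <- H. rewrite vaddA.
  rewrite (vaddC (vopp v) v), vaddN. apply vadd0l.
Qed.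

Lemma vsub_add (a b c : V) : vsub a c = vadd (vsub a b) (vsub b c).
Proof.
  unfold vsub. rewrite vaddA. rewrite <- (vaddA a (vopp b) b).
  rewrite (vaddC (vopp b) b), vaddN, vadd0. reflexivity.
Qed.

Lemma vscal_sub k (a b : V) : vscal k (vsub a b) = vsub (vscal k a) (vscal k b).
Proof.
  unfold vsub. rewrite vscalDr. f_equal. rewrite !vopp_scal, !vscalA. f_equal. cxeq.
Qed.
End CVSL.


Lemma Re_le_Cabs z : Rabs (Re z) <= Cabs z.
Proof.
  unfold Cabs. rewrite <- sqrt_Rsqr_abs. apply sqrt_le_1_alt. unfold Rsqr.
  pose proof (Rle_0_sqr (Im z)); unfold Rsqr in *; lra.
Qed.
Lemma Im_le_Cabs z : Rabs (Im z) <= Cabs z.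
Proof.
  unfold Cabs. rewrite <- sqrt_Rsqr_abs. apply sqrt_le_1_alt. unfold Rsqr.
  pose proof (Rle_0_sqr (Re z)); unfold Rsqr in *; lra.
Qed.

Lemma C0_of_small z : (forall eps, 0 < eps -> Rabs (Re z) < eps /\ Rabs (Im z) < eps) -> z = C0.
Proof.
  intro H. apply Cx_eq; simpl.
  - destruct (Req_dec (Re z) 0) as [|E]; auto.
    destruct (H (Rabs (Re z))) as [H1 _]. apply Rabs_pos_lt; auto. lra.
  - destruct (Req_dec (Im z) 0) as [|E]; auto.
    destruct (H (Rabs (Im z))) as [_ H1]. apply Rabs_pos_lt; auto. lra.
Qed.

Lemma R0_of_small (r : R) : 0 <= r -> (forall eps, 0 < eps -> r <= eps) -> r = 0.
Proof.
  intros H1 H2. destruct (Req_dec r 0); auto.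
  specialize (H2 (r/2)). lra.
Qed.

Section HLG.
Variable V : CVS.
Variable ipr : V -> V -> Cx.
Hypothesis innerDl : forall u v w, ipr (vadd u v) w = Cadd (ipr u w) (ipr v w).
Hypothesis innerZl : forall a u w, ipr (vscal a u) w = Cmul a (ipr u w).
Hypothesis inner_sym : forall u v, ipr v u = Cconj (ipr u v).
Hypothesis inner_pos : forall v, Cnonneg (ipr v v).
Hypothesis inner_def : forall v, ipr v v = C0 -> v = vzero.

Lemma inner_add_r_G (u v w : V) : ipr u (vadd v w) = Cadd (ipr u v) (ipr u w).
Proof.
  rewrite (inner_sym (vadd v w) u), innerDl, (inner_sym v u), (inner_sym w u). cxeq.
Qed.

Lemma inner_scal_r_G k (u v : V) : ipr u (vscal k v) = Cmul (Cconj k) (ipr u v).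
Proof.
  rewrite (inner_sym (vscal k v) u), innerZl, (inner_sym v u). cxeq.
Qed.

Lemma inner_zero_l_G (v : V) : ipr vzero v = C0.
Proof. rewrite <- (vscal0 V vzero). rewrite innerZl. cxeq. Qed.

Lemma inner_zero_r_G (v : V) : ipr v vzero = C0.
Proof. rewrite <- (vscal0 V vzero). rewrite inner_scal_r_G. cxeq. Qed.

Lemma inner_opp_l_G (u v : V) : ipr (vopp u) v = Copp (ipr u v).
Proof. rewrite vopp_scal, innerZl. unfold Copp. cxeq. Qed.

Lemma inner_sub_l_G (u v d : V) : ipr (vsub u v) d = Cadd (ipr u d) (Copp (ipr v d)).
Proof. unfold vsub. rewrite innerDl, inner_opp_l_G. reflexivity. Qed.

Lemma Re_inner_ge0_G (v : V) : 0 <= Re (ipr v v).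
Proof. apply (inner_pos v). Qed.

Lemma ipnorm_ge0_G (v : V) : 0 <= ipnorm ipr v.
Proof. apply sqrt_pos. Qed.

Lemma ipnorm_sq_G (v : V) : ipnorm ipr v * ipnorm ipr v = Re (ipr v v).
Proof. unfold ipnorm. apply sqrt_sqrt. apply Re_inner_ge0_G. Qed.

Lemma inner_expand_G (u v : V) k :
  ipr (vadd u (vscal k v)) (vadd u (vscal k v)) =
  Cadd (Cadd (ipr u u) (Cmul (Cconj k) (ipr u v)))
       (Cadd (Cmul k (ipr v u)) (Cmul (Cmul k (Cconj k)) (ipr v v))).
Proof.
  rewrite innerDl, !inner_add_r_G, !innerZl, !inner_scal_r_G. cxeq.
Qed.

Lemma CS_G (u v : V) : Cabs (ipr u v) <= ipnorm ipr u * ipnorm ipr v.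
Proof.
  apply Cabs_le_of_sq; try apply Re_inner_ge0_G.
  apply real_cs; try apply Re_inner_ge0_G.
  intros t1 t2. pose proof (Re_inner_ge0_G (vadd u (vscal (mkC t1 t2) v))) as P.
  rewrite inner_expand_G in P. rewrite (inner_sym u v) in P. simpl in P.
  lra.
Qed.

Lemma ipnorm_scal_G k (v : V) : ipnorm ipr (vscal k v) = Cabs k * ipnorm ipr v.
Proof.
  unfold ipnorm, Cabs. rewrite innerZl, inner_scal_r_G. rewrite <- sqrt_mult.
  - f_equal. simpl. pose proof (proj1 (inner_pos v)) as P. rewrite P. ring.
  - nra.
  - apply Re_inner_ge0_G.
Qed.

Lemma ipnorm_triangle_G (u v : V) : ipnorm ipr (vadd u v) <= ipnorm ipr u + ipnorm ipr v.
Proof.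
  unfold ipnorm at 1. rewrite <- (sqrt_Rsqr (ipnorm ipr u + ipnorm ipr v))
    by (pose proof (ipnorm_ge0_G u); pose proof (ipnorm_ge0_G v); lra).
  apply sqrt_le_1_alt. unfold Rsqr.
  rewrite innerDl, !inner_add_r_G. simpl.
  pose proof (ipnorm_sq_G u). pose proof (ipnorm_sq_G v).
  pose proof (CS_G u v). pose proof (Re_le_Cabs (ipr u v)).
  rewrite (inner_sym u v). simpl.
  pose proof (Rle_abs (Re (ipr u v))).
  nra.
Qed.

Lemma ipnorm_parallel_G (a b : V) :
  (ipnorm ipr (vadd a b))^2 + (ipnorm ipr (vsub a b))^2 =
  2 * (ipnorm ipr a)^2 + 2 * (ipnorm ipr b)^2.
Proof.
  simpl. rewrite !Rmult_1_r, !ipnorm_sq_G. unfold vsub.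
  rewrite (vopp_scal V b).
  rewrite !innerDl, !inner_add_r_G, !innerZl, !inner_scal_r_G. simpl. ring.
Qed.

Lemma ipnorm_sub_sym_G (a b : V) : ipnorm ipr (vsub a b) = ipnorm ipr (vsub b a).
Proof.
  replace (vsub a b) with (vscal (mkC (-1) 0) (vsub b a)).
  - rewrite ipnorm_scal_G. unfold Cabs; simpl.
    replace (-1 * -1 + 0 * 0) with 1 by ring. rewrite sqrt_1. ring.
  - rewrite vscal_sub. unfold vsub. rewrite <- !vopp_scal. rewrite vaddC. f_equal.
    rewrite (vopp_scal V (vopp a)), vopp_scal, vscalA.
    replace (Cmul (mkC (-1) 0) (mkC (-1) 0)) with C1 by cxeq. apply vscal1.
Qed.

Lemma vsub_zero_G (a : V) : vsub a vzero = a.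
Proof.
  unfold vsub. rewrite vopp_scal, vscal_zero, vadd0. reflexivity.
Qed.

Lemma vsub_eq0_G (a b : V) : vsub a b = vzero -> a = b.
Proof.
  intro E. transitivity (vadd (vsub a b) b).
  - unfold vsub. rewrite <- vaddA, (vaddC (vopp b) b), vaddN, vadd0. reflexivity.
  - rewrite E. apply vadd0l.
Qed.

Lemma ipnorm0_zero_G (w : V) : ipnorm ipr w = 0 -> w = vzero.
Proof.
  intro E. apply inner_def. pose proof (ipnorm_sq_G w) as H0. rewrite E in H0.
  apply Cx_eq; simpl. lra. apply (inner_pos w).
Qed.

End HLG.

Ltac hyps := first [exact innerDl | exact innerZl | exact inner_sym | exact inner_pos | exact inner_def].

Section HL.
Variable H : Hilbert.
Lemma inner_add_r (u v w : H) : inner u (vadd v w) = Cadd (inner u v) (inner u w).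
Proof. intros; eapply inner_add_r_G; try hyps; eauto. Qed.

Lemma inner_scal_r k (u v : H) : inner u (vscal k v) = Cmul (Cconj k) (inner u v).
Proof. intros; eapply inner_scal_r_G; try hyps; eauto. Qed.

Lemma inner_zero_l (v : H) : inner vzero v = C0.
Proof. intros; eapply inner_zero_l_G; try hyps; eauto. Qed.

Lemma inner_zero_r (v : H) : inner v vzero = C0.
Proof. intros; eapply inner_zero_r_G; try hyps; eauto. Qed.

Lemma inner_opp_l (u v : H) : inner (vopp u) v = Copp (inner u v).
Proof. intros; eapply inner_opp_l_G; try hyps; eauto. Qed.

Lemma inner_sub_l (u v d : H) : inner (vsub u v) d = Cadd (inner u d) (Copp (inner v d)).
Proof. intros; eapply inner_sub_l_G; try hyps; eauto. Qed.

Lemma Re_inner_ge0 (v : H) : 0 <= Re (inner v v).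
Proof. intros; eapply Re_inner_ge0_G; try hyps; eauto. Qed.

Lemma ipnorm_ge0 (v : H) : 0 <= ipnorm inner v.
Proof. intros; eapply ipnorm_ge0_G; try hyps; eauto. Qed.

Lemma ipnorm_sq (v : H) : ipnorm inner v * ipnorm inner v = Re (inner v v).
Proof. intros; eapply ipnorm_sq_G; try hyps; eauto. Qed.

Lemma inner_expand (u v : H) k :
  inner (vadd u (vscal k v)) (vadd u (vscal k v)) =
  Cadd (Cadd (inner u u) (Cmul (Cconj k) (inner u v)))
       (Cadd (Cmul k (inner v u)) (Cmul (Cmul k (Cconj k)) (inner v v))).
Proof. intros; eapply inner_expand_G; try hyps; eauto. Qed.

Lemma CS (u v : H) : Cabs (inner u v) <= ipnorm inner u * ipnorm inner v.
Proof. intros; eapply CS_G; try hyps; eauto. Qed.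

Lemma ipnorm_scal k (v : H) : ipnorm inner (vscal k v) = Cabs k * ipnorm inner v.
Proof. intros; eapply ipnorm_scal_G; try hyps; eauto. Qed.

Lemma ipnorm_triangle (u v : H) : ipnorm inner (vadd u v) <= ipnorm inner u + ipnorm inner v.
Proof. intros; eapply ipnorm_triangle_G; try hyps; eauto. Qed.

Lemma ipnorm_parallel (a b : H) :
  (ipnorm inner (vadd a b))^2 + (ipnorm inner (vsub a b))^2 =
  2 * (ipnorm inner a)^2 + 2 * (ipnorm inner b)^2.
Proof. intros; eapply ipnorm_parallel_G; try hyps; eauto. Qed.

Lemma ipnorm_sub_sym (a b : H) : ipnorm inner (vsub a b) = ipnorm inner (vsub b a).
Proof. intros; eapply ipnorm_sub_sym_G; try hyps; eauto. Qed.

Lemma vsub_zero (a : H) : vsub a vzero = a.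
Proof. intros; eapply vsub_zero_G; try hyps; eauto. Qed.

Lemma vsub_eq0 (a b : H) : vsub a b = vzero -> a = b.
Proof. intros; eapply vsub_eq0_G; try hyps; eauto. Qed.

Lemma ipnorm0_zero (w : H) : ipnorm inner w = 0 -> w = vzero.
Proof. intros; eapply ipnorm0_zero_G; try hyps; eauto. Qed.

Lemma dense_zero (D : H -> Prop) (w : H) : dense_subspace D ->
  (forall d, D d -> inner d w = C0) -> w = vzero.
Proof.
  intros [_ [_ [_ Dd]]] Hz. apply ipnorm0_zero.
  apply R0_of_small. apply ipnorm_ge0.
  intros eps Heps.
  destruct (Dd w eps Heps) as [d [Hd Hn]].
  assert (E : inner (vsub w d) w = inner w w).
  { rewrite inner_sub_l, (Hz d Hd). cxeq. }
  pose proof (CS (vsub w d) w) as C. rewrite E in C.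
  pose proof (Re_le_Cabs (inner w w)). rewrite <- ipnorm_sq in H0.
  pose proof (ipnorm_ge0 w). pose proof (ipnorm_ge0 (vsub w d)).
  pose proof (Rle_abs (ipnorm inner w * ipnorm inner w)).
  destruct (Req_dec (ipnorm inner w) 0) as [Z|Z]. lra.
  assert (ipnorm inner w * ipnorm inner w <= ipnorm inner (vsub w d) * ipnorm inner w) by lra.
  assert (ipnorm inner w <= ipnorm inner (vsub w d)) by (apply Rmult_le_reg_r with (ipnorm inner w); lra).
  lra.
Qed.

Lemma adj_unique (D : H -> Prop) X u w1 w2 : dense_subspace D ->
  is_adj D X u w1 -> is_adj D X u w2 -> w1 = w2.
Proof.
  intros HD A1 A2. apply vsub_eq0. apply (dense_zero D); auto.
  intros d Hd. unfold vsub. rewrite inner_add_r, vopp_scal, inner_scal_r.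
  rewrite <- (A1 d Hd), <- (A2 d Hd). cxeq.
Qed.

Lemma adj_spec (D : H -> Prop) X u : (exists w, is_adj D X u w) -> is_adj D X u (adj D X u).
Proof.
  intros [w Hw]. unfold adj. apply epsilon_spec. exists w; exact Hw.
Qed.

Lemma adj_eq (D : H -> Prop) X u w : dense_subspace D -> is_adj D X u w -> adj D X u = w.
Proof.
  intros HD Hw. apply (adj_unique D X u); auto. apply adj_spec. exists w; auto.
Qed.

Lemma closable_of_adj (D : H -> Prop) X : dense_subspace D ->
  (forall u, D u -> exists w, is_adj D X u w) -> closable D X.
Proof.
  intros HD Had f w Hf Hf0 HXf.
  apply (dense_zero D); auto. intros d Hd.
  destruct (Had d Hd) as [a Ha].
  rewrite (inner_sym w d).
  assert (Z : inner w d = C0).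
  2:{ rewrite Z. cxeq. }
  apply C0_of_small. intros eps Heps.
  set (K := ipnorm inner d + ipnorm inner a + 1).
  assert (HK : 0 < K) by (unfold K; pose proof (ipnorm_ge0 d); pose proof (ipnorm_ge0 a); lra).
  destruct (Hf0 (eps / K)) as [N1 HN1]. apply Rdiv_lt_0_compat; lra.
  destruct (HXf (eps / K)) as [N2 HN2]. apply Rdiv_lt_0_compat; lra.
  specialize (HN1 (max N1 N2) (Nat.le_max_l _ _)).
  specialize (HN2 (max N1 N2) (Nat.le_max_r _ _)).
  set (n := max N1 N2) in *.
  rewrite vsub_zero in HN1. rewrite ipnorm_sub_sym in HN2.
  assert (E : inner w d = Cadd (inner (vsub w (X (f n))) d) (inner (f n) a)).
  { rewrite inner_sub_l, <- (Ha (f n) (Hf n)). cxeq. }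
  pose proof (CS (vsub w (X (f n))) d) as C1'.
  pose proof (CS (f n) a) as C2'.
  pose proof (ipnorm_ge0 d). pose proof (ipnorm_ge0 a).
  pose proof (ipnorm_ge0 (f n)). pose proof (ipnorm_ge0 (vsub w (X (f n)))).
  assert (B : Cabs (inner (vsub w (X (f n))) d) + Cabs (inner (f n) a) < eps).
  { assert (ipnorm inner (vsub w (X (f n))) * ipnorm inner d <= eps / K * ipnorm inner d) by nra.
    assert (ipnorm inner (f n) * ipnorm inner a <= eps / K * ipnorm inner a) by nra.
    assert (eps / K * ipnorm inner d + eps / K * ipnorm inner a < eps).
    { replace (eps / K * ipnorm inner d + eps / K * ipnorm inner a) with
        (eps * ((ipnorm inner d + ipnorm inner a) / K)) by (field; lra).
      assert ((ipnorm inner d + ipnorm inner a) / K < 1).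
      { apply (Rmult_lt_reg_r K); auto. unfold Rdiv. rewrite Rmult_assoc, Rinv_l by lra. unfold K. lra. }
      nra. }
    lra. }
  rewrite E. simpl.
  pose proof (Re_le_Cabs (inner (vsub w (X (f n))) d)). pose proof (Re_le_Cabs (inner (f n) a)).
  pose proof (Im_le_Cabs (inner (vsub w (X (f n))) d)). pose proof (Im_le_Cabs (inner (f n) a)).
  split; eapply Rle_lt_trans; try apply Rabs_triang; lra.
Qed.
End HL.


Lemma cnum_CS (A B B' Cc : Cx) : Cnonneg Cc ->
  (forall k, Cnonneg (Cadd (Cadd A (Cmul (Cconj k) B)) (Cadd (Cmul k B') (Cmul (Cmul k (Cconj k)) Cc)))) ->
  B' = Cconj B /\ Cabs B <= sqrt (Re A) * sqrt (Re Cc).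
Proof.
  intros [HC1 HC2] Hk.
  destruct (Hk C0) as [H01 H02]. destruct (Hk C1) as [H11 _].
  destruct (Hk (mkC 0 1)) as [Hi1 _]. simpl in *.
  assert (E1 : Im B' = - Im B) by lra.
  assert (E2 : Re B' = Re B) by lra.
  split. { apply Cx_eq; simpl; lra. }
  apply Cabs_le_of_sq; try lra.
  apply real_cs; try lra.
  intros t1 t2. destruct (Hk (mkC t1 t2)) as [_ P]. simpl in P.
  rewrite E1, E2, HC1 in P. lra.
Qed.

Section Easy.
Variable Q : QStarAlg.
Variable e : Q.
Variable w : Q -> Cx.
Hypothesis He : is_unit e.
Hypothesis Hw : lin_functional w.
Hypothesis H1 : L1 w.
Hypothesis H2 : L2 w.

Lemma estar : qstar e = e.
Proof.
  destruct He as [He0 Hu].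
  pose proof (qstarM (qstar e) e He0) as E.
  rewrite qstarK in E. rewrite (proj1 (Hu (qstar e))) in E.
  rewrite qstarK in E. symmetry. exact E.
Qed.

Lemma w_sym (b h : Q) : inA0 h -> w (qmul (qstar b) h) = Cconj (w (qmul (qstar h) b)).
Proof.
  intro Hh. destruct He as [He0 Hu].
  pose proof (H2 h e b Hh He0) as E. rewrite estar in E.
  rewrite (proj2 (Hu (qstar b))), (proj1 (Hu (qmul (qstar h) b))) in E. exact E.
Qed.

Lemma ii_L3 (H : Hilbert) (D : H -> Prop) (pi : Q -> H -> H) (zeta : H) :
  star_rep e D pi -> D zeta -> (forall a, w a = inner (pi a zeta) zeta) -> L3 w.
Proof.
  intros [HD [HL [_ [_ [Hst [Hmul _]]]]]] Hz Hwa.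
  assert (key : forall b x, inA0 x -> w (qmul b x) = inner (pi x zeta) (adj D (pi b) zeta)).
  { intros b x Hx. rewrite Hwa. destruct (Hmul b x Hx) as [[LM1 _] Wp].
    rewrite <- (Wp zeta Hz). unfold wprod.
    pose proof (adj_spec H D (adj D (pi b)) (pi x zeta) (LM1 zeta Hz) zeta Hz) as A.
    rewrite (inner_sym zeta (adj D (adj D (pi b)) (pi x zeta))).
    rewrite <- A. rewrite (inner_sym (pi x zeta) (adj D (pi b) zeta)).
    apply Cx_eq; simpl; ring. }
  intro a. exists (ipnorm inner (pi a zeta) + 1). split.
  { pose proof (ipnorm_ge0 H (pi a zeta)); lra. }
  intros x Hx.
  rewrite key by auto. rewrite key by auto.
  rewrite <- !Hst by auto. rewrite !qstarK.
  pose proof (CS H (pi x zeta) (pi a zeta)).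
  assert (E : sqrt (Re (inner (pi x zeta) (pi x zeta))) = ipnorm inner (pi x zeta)) by reflexivity.
  rewrite E. pose proof (ipnorm_ge0 H (pi x zeta)). pose proof (ipnorm_ge0 H (pi a zeta)). nra.
Qed.

Lemma iii_L3 (Om : Q -> Q -> Cx) : in_QA0 Om -> (forall a, w a = Om a e) -> L3 w.
Proof.
  intros [[SDl [SDr [SZl SZr]]] [Spos Sm]] Hwa.
  destruct He as [He0 Hu].
  intro a.
  assert (CSa : forall x, Cabs (Om x a) <= sqrt (Re (Om x x)) * sqrt (Re (Om a a))).
  { intro x. refine (proj2 (cnum_CS (Om x x) (Om x a) (Om a x) (Om a a) (Spos a) _)).
    intro k. pose proof (Spos (vadd x (vscal k a))) as P.
    rewrite SDl, !SDr, !SZl, !SZr in P.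
    replace (Cadd (Cadd (Om x x) (Cmul (Cconj k) (Om x a)))
       (Cadd (Cmul k (Om a x)) (Cmul (Cmul k (Cconj k)) (Om a a)))) with
      (Cadd (Cadd (Om x x) (Cmul (Cconj k) (Om x a)))
       (Cadd (Cmul k (Om a x)) (Cmul k (Cmul (Cconj k) (Om a a))))) by cxeq.
    exact P. }
  exists (sqrt (Re (Om a a)) + 1). split. { pose proof (sqrt_pos (Re (Om a a))); lra. }
  intros x Hx.
  rewrite !Hwa. rewrite !Sm by auto. rewrite !qstarK, (proj1 (Hu a)), (proj1 (Hu x)).
  pose proof (CSa x). pose proof (sqrt_pos (Re (Om a a))). pose proof (sqrt_pos (Re (Om x x))).
  nra.
Qed.

Lemma iv_L3 (p : Q -> R) : hilbert_seminorm p ->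
  (forall (a x : Q), inA0 x -> Cabs (w (qmul (qstar a) x)) <= p a * sqrt (Re (w (qmul (qstar x) x)))) ->
  L3 w.
Proof.
  intros [Hp _] Hb a. exists (p a + 1). split. { pose proof (Hp a); lra. }
  intros x Hx. pose proof (Hb a x Hx). pose proof (sqrt_pos (Re (w (qmul (qstar x) x)))). nra.
Qed.
End Easy.


Definition clim (u : nat -> Cx) (l : Cx) : Prop :=
  Un_cv (fun n => Re (u n)) (Re l) /\ Un_cv (fun n => Im (u n)) (Im l).

Definition climv (u : nat -> Cx) : Cx := epsilon (inhabits C0) (clim u).

Lemma climv_spec u l : clim u l -> climv u = l.
Proof.
  intro H. assert (H' : clim u (climv u)) by (unfold climv; apply epsilon_spec; eauto).
  destruct H as [A B], H' as [A' B']. apply Cx_eq.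
  - eapply UL_sequence; eauto.
  - eapply UL_sequence; eauto.
Qed.

Lemma clim_unique u l1 l2 : clim u l1 -> clim u l2 -> l1 = l2.
Proof. intros H1' H2'. rewrite <- (climv_spec u l1), <- (climv_spec u l2); auto. Qed.

Lemma Un_cv_const c : Un_cv (fun _ => c) c.
Proof. intros eps He. exists 0%nat. intros. unfold Rdist. rewrite Rminus_diag, Rabs_R0. lra. Qed.

Lemma Un_cv_ext (a b : nat -> R) l : (forall n, a n = b n) -> Un_cv a l -> Un_cv b l.
Proof. intros E H eps He. destruct (H eps He) as [N HN]. exists N. intros. rewrite <- E. auto. Qed.

Lemma clim_ext u v l : (forall n, u n = v n) -> clim u l -> clim v l.
Proof. intros E [A B]. split; eapply Un_cv_ext; try eassumption; intro n; simpl; rewrite E; auto. Qed.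

Lemma clim_const c : clim (fun _ => c) c.
Proof. split; apply Un_cv_const. Qed.

Lemma clim_add u v l1 l2 : clim u l1 -> clim v l2 -> clim (fun n => Cadd (u n) (v n)) (Cadd l1 l2).
Proof. intros [A B] [C D]. split; simpl; apply CV_plus; auto. Qed.

Lemma clim_scal k u l : clim u l -> clim (fun n => Cmul k (u n)) (Cmul k l).
Proof.
  intros [A B]. split; simpl.
  - apply (CV_plus (fun n => Re k * Re (u n)) (fun n => - (Im k * Im (u n)))).
    + apply CV_mult; auto. apply Un_cv_const.
    + apply (CV_opp (fun n => Im k * Im (u n))). apply CV_mult; auto. apply Un_cv_const.
  - apply CV_plus; apply CV_mult; auto; apply Un_cv_const.
Qed.

Lemma clim_conj u l : clim u l -> clim (fun n => Cconj (u n)) (Cconj l).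
Proof. intros [A B]. split; simpl; auto. apply (CV_opp (fun n => Im (u n))). auto. Qed.

Lemma clim_opp u l : clim u l -> clim (fun n => Copp (u n)) (Copp l).
Proof. intros [A B]. split; simpl. apply (CV_opp (fun n => Re (u n))); auto. apply (CV_opp (fun n => Im (u n))); auto. Qed.

Lemma clim_sub0 u v l : clim v l -> clim (fun n => Cadd (u n) (Copp (v n))) C0 -> clim u l.
Proof.
  intros Hv Hd. apply (clim_ext (fun n => Cadd (Cadd (u n) (Copp (v n))) (v n))).
  { intro n. cxeq. }
  replace l with (Cadd C0 l) by cxeq. apply clim_add; auto.
Qed.

Lemma clim_of_cauchy u : (forall eps, 0 < eps -> exists N, forall m n, (N <= m)%nat -> (N <= n)%nat ->
   Cabs (Cadd (u m) (Copp (u n))) < eps) -> exists l, clim u l.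
Proof.
  intro H.
  assert (CR : Cauchy_crit (fun n => Re (u n))).
  { intros eps He. destruct (H eps He) as [N HN]. exists N. intros n m Hn Hm.
    unfold Rdist. pose proof (Re_le_Cabs (Cadd (u n) (Copp (u m)))). specialize (HN n m Hn Hm).
    simpl in H0. unfold Rminus. lra. }
  assert (CI : Cauchy_crit (fun n => Im (u n))).
  { intros eps He. destruct (H eps He) as [N HN]. exists N. intros n m Hn Hm.
    unfold Rdist. pose proof (Im_le_Cabs (Cadd (u n) (Copp (u m)))). specialize (HN n m Hn Hm).
    simpl in H0. unfold Rminus. lra. }
  destruct (R_complete _ CR) as [a Ha]. destruct (R_complete _ CI) as [b Hb].
  exists (mkC a b). split; auto.
Qed.

Lemma lim_le (a : nat -> R) l c r N : Un_cv a l -> (forall n, (N <= n)%nat -> Rabs (a n - c) <= r) ->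
  Rabs (l - c) <= r.
Proof.
  intros Ha Hb. destruct (Rle_dec (Rabs (l - c)) r) as [|Hn]; auto.
  exfalso. destruct (Ha (Rabs (l - c) - r)) as [M HM]. lra.
  specialize (HM (max N M) (Nat.le_max_r _ _)). specialize (Hb (max N M) (Nat.le_max_l _ _)).
  unfold Rdist in HM.
  pose proof (Rabs_triang (a (max N M) - c) (l - a (max N M))).
  replace (a (max N M) - c + (l - a (max N M))) with (l - c) in H by ring.
  rewrite Rabs_minus_sym in HM. lra.
Qed.

Lemma clim_zero u : (forall eps, 0 < eps -> exists N, forall n, (N <= n)%nat -> Cabs (u n) <= eps) ->
  clim u C0.
Proof.
  intro H. split; intros eps He; destruct (H (eps/2)) as [N HN]; try lra; exists N; intros n Hn;
  unfold Rdist; simpl; rewrite Rminus_0_r; specialize (HN n Hn).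
  - pose proof (Re_le_Cabs (u n)). lra.
  - pose proof (Im_le_Cabs (u n)). lra.
Qed.

Lemma eps_nat (eps : R) : 0 < eps -> exists N : nat, forall n, (N <= n)%nat -> / (INR n + 1) < eps.
Proof.
  intro He. destruct (archimed_cor1 eps He) as [N [HN HN0]]. exists N. intros n Hn.
  apply Rle_lt_trans with (/ INR N); auto.
  apply Rinv_le_contravar. apply lt_0_INR; lia.
  apply le_INR in Hn. lra.
Qed.

Lemma sqrt_le_half z : 0 <= z -> sqrt z <= (1 + z) / 2.
Proof.
  intro Hz. pose proof (sqrt_sqrt z Hz). pose proof (sqrt_pos z).
  pose proof (Rle_0_sqr (sqrt z - 1)). unfold Rsqr in *. nra.
Qed.


Lemma Cabs_triangle a b : Cabs (Cadd a b) <= Cabs a + Cabs b.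
Proof.
  unfold Cabs. simpl.
  set (A := Re a * Re a + Im a * Im a). set (B := Re b * Re b + Im b * Im b).
  assert (HA : 0 <= A) by (unfold A; nra). assert (HB : 0 <= B) by (unfold B; nra).
  rewrite <- (sqrt_Rsqr (sqrt A + sqrt B)) by (pose proof (sqrt_pos A); pose proof (sqrt_pos B); lra).
  apply sqrt_le_1_alt. unfold Rsqr.
  pose proof (sqrt_sqrt A HA). pose proof (sqrt_sqrt B HB).
  pose proof (sqrt_pos A). pose proof (sqrt_pos B).
  assert (Re a * Re b + Im a * Im b <= sqrt A * sqrt B).
  { rewrite <- sqrt_mult by auto.
    destruct (Rle_dec (Re a * Re b + Im a * Im b) 0) as [C|C].
    - pose proof (sqrt_pos (A * B)). lra.
    - rewrite <- (sqrt_Rsqr (Re a * Re b + Im a * Im b)) by lra. apply sqrt_le_1_alt.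
      unfold Rsqr, A, B. pose proof (Rle_0_sqr (Re a * Im b - Im a * Re b)) as S. unfold Rsqr in S.
      match goal with |- ?L <= ?R => replace R with (L + (Re a * Im b - Im a * Re b) * (Re a * Im b - Im a * Re b)) by ring end.
      lra. }
  match goal with |- ?L <= _ => replace L with (A + B + 2 * (Re a * Re b + Im a * Im b)) by (unfold A, B; ring) end.
  nra.
Qed.

Lemma vsub_addadd (V : CVS) (a b c d : V) : vsub (vadd a b) (vadd c d) = vadd (vsub a c) (vsub b d).
Proof.
  unfold vsub. rewrite !vopp_scal, vscalDr.
  rewrite <- !vaddA. f_equal. rewrite !vaddA. f_equal. apply vaddC.
Qed.

Lemma vsub_add_cancel (V : CVS) (a b : V) : vadd (vsub a b) b = a.
Proof. unfold vsub. rewrite <- vaddA, (vaddC (vopp b) b), vaddN, vadd0. reflexivity. Qed.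

Lemma vsub_self (V : CVS) (a : V) : vsub a a = vzero.
Proof. apply vaddN. Qed.

Lemma bounded_seq (f : nat -> R) N : exists B, forall n, (n < N)%nat -> f n <= B.
Proof.
  induction N as [|N [B HB]].
  - exists 0. intros; lia.
  - exists (Rmax B (f N)). intros n Hn.
    destruct (Nat.eq_dec n N) as [->|Hne]. apply Rmax_r.
    apply Rle_trans with B. apply HB; lia. apply Rmax_l.
Qed.

Lemma Un_cv_ge0 (a : nat -> R) l : Un_cv a l -> (forall n, 0 <= a n) -> 0 <= l.
Proof.
  intros Ha Hp. destruct (Rle_dec 0 l) as [|C]; auto. exfalso.
  destruct (Ha (- l)) as [N HN]. lra. specialize (HN N (le_n N)). specialize (Hp N).
  unfold Rdist in HN. rewrite Rabs_right in HN by lra. lra.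
Qed.

Lemma clim0_le u : (forall eps, 0 < eps -> exists N, forall n, (N <= n)%nat ->
  Rabs (Re (u n)) <= eps /\ Rabs (Im (u n)) <= eps) -> clim u C0.
Proof.
  intro H. split; intros eps He; destruct (H (eps/2)) as [N HN]; try lra; exists N; intros n Hn;
  unfold Rdist; simpl; rewrite Rminus_0_r; specialize (HN n Hn); lra.
Qed.

Lemma clim0_add a b : clim a C0 -> clim b C0 -> clim (fun n => Cadd (a n) (b n)) C0.
Proof. intros A B. pose proof (clim_add a b C0 C0 A B) as P. replace (Cadd C0 C0) with C0 in P by cxeq. exact P. Qed.
Lemma clim0_opp a : clim a C0 -> clim (fun n => Copp (a n)) C0.
Proof. intros A. pose proof (clim_opp a C0 A) as P. replace (Copp C0) with C0 in P by (unfold Copp; cxeq). exact P. Qed.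
Lemma clim0_conj a : clim a C0 -> clim (fun n => Cconj (a n)) C0.
Proof. intros A. pose proof (clim_conj a C0 A) as P. replace (Cconj C0) with C0 in P by cxeq. exact P. Qed.


Lemma Cabs0 z : Cabs z <= 0 -> z = C0.
Proof.
  intro H. pose proof (Cabs_ge0 z). assert (E : Cabs z = 0) by lra.
  unfold Cabs in E. apply sqrt_eq_0 in E; [|nra].
  apply Cx_eq; simpl; nra.
Qed.

Section V.
Variable Q : QStarAlg.
Variable e : Q.
Variable w : Q -> Cx.
Hypothesis He : is_unit e.
Hypothesis Hw : lin_functional w.
Hypothesis H1 : L1 w.
Hypothesis H2 : L2 w.
Hypothesis H3 : L3 w.

Lemma wadd a b : w (vadd a b) = Cadd (w a) (w b).
Proof. apply (proj1 Hw). Qed.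
Lemma wscal k a : w (vscal k a) = Cmul k (w a).
Proof. apply (proj2 Hw). Qed.

Lemma w_zero : w vzero = C0.
Proof. rewrite <- (vscal0 Q vzero), wscal. cxeq. Qed.

Lemma qmul_zero_r (a : Q) : qmul a vzero = vzero.
Proof.
  transitivity (qmul a (vscal C0 vzero)). { rewrite vscal0. reflexivity. }
  rewrite qmulZr by (right; apply A0_zero). apply vscal0.
Qed.

Lemma qmul_zero_l (a : Q) : qmul vzero a = vzero.
Proof.
  transitivity (qmul (vscal C0 vzero) a). { rewrite vscal0. reflexivity. }
  rewrite qmulZl by (left; apply A0_zero). apply vscal0.
Qed.

Lemma qstar_zero : qstar (@vzero Q) = vzero.
Proof.
  transitivity (qstar (vscal C0 (@vzero Q))). { rewrite vscal0. reflexivity. }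
  rewrite qstarZ. replace (Cconj C0) with C0 by cxeq. apply vscal0.
Qed.

Lemma A0_opp (x : Q) : inA0 x -> inA0 (vopp x).
Proof. intro. rewrite vopp_scal. apply A0_scal; auto. Qed.

Lemma A0_sub (x y : Q) : inA0 x -> inA0 y -> inA0 (vsub x y).
Proof. intros. apply A0_add; auto. apply A0_opp; auto. Qed.

Definition ip (x y : Q) : Cx := w (qmul (qstar y) x).

Lemma ip_addl x1 x2 y : inA0 y -> ip (vadd x1 x2) y = Cadd (ip x1 y) (ip x2 y).
Proof. intro. unfold ip. rewrite qmulDr by (left; apply A0_star; auto). apply wadd. Qed.
Lemma ip_scall k x y : inA0 y -> ip (vscal k x) y = Cmul k (ip x y).
Proof. intro. unfold ip. rewrite qmulZr by (left; apply A0_star; auto). apply wscal. Qed.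
Lemma ip_addr x y1 y2 : inA0 x -> ip x (vadd y1 y2) = Cadd (ip x y1) (ip x y2).
Proof. intro. unfold ip. rewrite qstarD, qmulDl by (left; auto). apply wadd. Qed.
Lemma ip_scalr k x y : inA0 x -> ip x (vscal k y) = Cmul (Cconj k) (ip x y).
Proof. intro. unfold ip. rewrite qstarZ, qmulZl by (right; auto). apply wscal. Qed.
Lemma ip_sym b h : inA0 h -> ip h b = Cconj (ip b h).
Proof. intro. unfold ip. eapply w_sym; eauto. Qed.
Lemma ip_zero_l y : ip vzero y = C0.
Proof. unfold ip. rewrite qmul_zero_r. apply w_zero. Qed.
Lemma ip_zero_r x : ip x vzero = C0.
Proof. unfold ip. rewrite qstar_zero, qmul_zero_l. apply w_zero. Qed.
Lemma ip_oppl x y : inA0 y -> ip (vopp x) y = Copp (ip x y).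
Proof. intro. rewrite vopp_scal, ip_scall by auto. unfold Copp; cxeq. Qed.
Lemma ip_oppr x y : inA0 x -> ip x (vopp y) = Copp (ip x y).
Proof. intro. rewrite vopp_scal, ip_scalr by auto. unfold Copp; cxeq. Qed.
Lemma ip_subl x1 x2 y : inA0 y -> ip (vsub x1 x2) y = Cadd (ip x1 y) (Copp (ip x2 y)).
Proof. intro. unfold vsub. rewrite ip_addl, ip_oppl by auto. reflexivity. Qed.
Lemma ip_subr x y1 y2 : inA0 x -> ip x (vsub y1 y2) = Cadd (ip x y1) (Copp (ip x y2)).
Proof. intro. unfold vsub. rewrite ip_addr, ip_oppr by auto. reflexivity. Qed.

Lemma ip_im0 x : inA0 x -> Im (ip x x) = 0.
Proof. intro Hx. exact (proj1 (H1 x Hx)). Qed.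

Definition n2 (x : Q) : R := Re (ip x x).
Definition nrm (x : Q) : R := sqrt (n2 x).

Lemma n2_ge0 x : inA0 x -> 0 <= n2 x.
Proof. intro. apply (H1 x); auto. Qed.
Lemma nrm_ge0 x : 0 <= nrm x.
Proof. apply sqrt_pos. Qed.
Lemma nrm_sq x : inA0 x -> nrm x * nrm x = n2 x.
Proof. intro. apply sqrt_sqrt, n2_ge0; auto. Qed.

Lemma ip_expand x y k : inA0 x -> inA0 y ->
  ip (vadd x (vscal k y)) (vadd x (vscal k y)) =
  Cadd (Cadd (ip x x) (Cmul (Cconj k) (ip x y)))
       (Cadd (Cmul k (ip y x)) (Cmul (Cmul k (Cconj k)) (ip y y))).
Proof.
  intros Hx Hy. assert (inA0 (vscal k y)) by (apply A0_scal; auto).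
  assert (inA0 (vadd x (vscal k y))) by (apply A0_add; auto).
  rewrite ip_addl by auto. rewrite !ip_addr by auto. rewrite !ip_scall, !ip_scalr by auto. cxeq.
Qed.

Lemma CSV x y : inA0 x -> inA0 y -> Cabs (ip x y) <= nrm x * nrm y.
Proof.
  intros Hx Hy.
  refine (proj2 (cnum_CS (ip x x) (ip x y) (ip y x) (ip y y) (H1 y Hy) _)).
  intro k. rewrite <- ip_expand by auto. apply H1. apply A0_add; auto. apply A0_scal; auto.
Qed.

Lemma n2_scal k x : inA0 x -> n2 (vscal k x) = (Re k * Re k + Im k * Im k) * n2 x.
Proof.
  intro Hx. unfold n2. rewrite ip_scall by (apply A0_scal; auto). rewrite ip_scalr by auto.
  simpl. rewrite (ip_im0 x Hx). ring.
Qed.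

Lemma n2_parallel x y : inA0 x -> inA0 y -> n2 (vadd x y) + n2 (vsub x y) = 2 * n2 x + 2 * n2 y.
Proof.
  intros Hx Hy. unfold n2, vsub. rewrite vopp_scal.
  assert (inA0 (vscal (mkC (-1) 0) y)) by (apply A0_scal; auto).
  rewrite (ip_addl x y) by (apply A0_add; auto). rewrite (ip_addl x (vscal _ y)) by (apply A0_add; auto).
  rewrite !ip_addr by auto. rewrite !ip_scall, !ip_scalr by auto. simpl. ring.
Qed.

Lemma n2_add_le x y : inA0 x -> inA0 y -> n2 (vadd x y) <= 2 * n2 x + 2 * n2 y.
Proof.
  intros. pose proof (n2_parallel x y H H0). pose proof (n2_ge0 (vsub x y) (A0_sub x y H H0)). lra.
Qed.

Lemma n2_sub_sym x y : inA0 x -> inA0 y -> n2 (vsub x y) = n2 (vsub y x).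
Proof.
  intros Hx Hy. replace (vsub x y) with (vscal (mkC (-1) 0) (vsub y x)).
  - rewrite n2_scal by (apply A0_sub; auto). simpl. ring.
  - rewrite vscal_sub. unfold vsub. rewrite <- !vopp_scal. rewrite vaddC. f_equal.
    rewrite (vopp_scal Q (vopp x)), vopp_scal, vscalA.
    replace (Cmul (mkC (-1) 0) (mkC (-1) 0)) with C1 by cxeq. apply vscal1.
Qed.

Lemma ip_bound (b : Q) : exists g, 0 < g /\ forall h, inA0 h -> Cabs (ip h b) <= g * nrm h.
Proof. destruct (H3 b) as [g [Hg Hb]]. exists g. split; auto. Qed.

Lemma ip_null z b : inA0 z -> n2 z = 0 -> ip z b = C0.
Proof.
  intros Hz E. destruct (ip_bound b) as [g [Hg Hb]]. apply Cabs0.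
  specialize (Hb z Hz). unfold nrm in Hb. rewrite E, sqrt_0 in Hb. lra.
Qed.

Definition cauchyV (y : nat -> Q) : Prop :=
  forall eps, 0 < eps -> exists N, forall m n, (N <= m)%nat -> (N <= n)%nat -> n2 (vsub (y m) (y n)) < eps.

Section Riesz.
Variable L : Q -> Cx.
Variable g : R.
Hypothesis Hg : 0 <= g.
Hypothesis Ladd : forall x y, inA0 x -> inA0 y -> L (vadd x y) = Cadd (L x) (L y).
Hypothesis Lscal : forall k x, inA0 x -> L (vscal k x) = Cmul k (L x).
Hypothesis Lb : forall h, inA0 h -> Cabs (L h) <= g * nrm h.

Lemma L_zero : L vzero = C0.
Proof. rewrite <- (vscal0 Q vzero), Lscal by apply A0_zero. cxeq. Qed.

Definition RE : R -> Prop := fun r => exists h, inA0 h /\ n2 h <= 1 /\ r = Re (L h).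

Lemma RE_bound : bound RE.
Proof.
  exists g. intros r [h [Hh [Hn ->]]].
  pose proof (Re_le_Cabs (L h)). pose proof (Rle_abs (Re (L h))). pose proof (Lb h Hh).
  assert (nrm h <= 1). { unfold nrm. rewrite <- sqrt_1. apply sqrt_le_1_alt. auto. }
  pose proof (nrm_ge0 h). nra.
Qed.

Lemma RE_ne : exists r, RE r.
Proof. exists (Re (L vzero)). exists vzero. split. apply A0_zero. split; auto.
  unfold n2. rewrite ip_zero_l. simpl. lra. Qed.

Definition Msup : R := proj1_sig (completeness RE RE_bound RE_ne).

Lemma Msup_lub : is_lub RE Msup.
Proof. unfold Msup. destruct (completeness RE RE_bound RE_ne). auto. Qed.

Lemma Msup_ge0 : 0 <= Msup.
Proof.
  destruct Msup_lub as [U _]. apply U. exists vzero. split. apply A0_zero.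
  unfold n2. rewrite ip_zero_l, L_zero. simpl. split; lra.
Qed.

Lemma LM u : inA0 u -> Re (L u) <= Msup * nrm u.
Proof.
  intro Hu. pose proof Msup_ge0. destruct (Req_dec (nrm u) 0) as [Z|Z].
  - pose proof (Lb u Hu). rewrite Z in *. pose proof (Re_le_Cabs (L u)).
    pose proof (Rle_abs (Re (L u))). nra.
  - pose proof (nrm_ge0 u). assert (P : 0 < nrm u) by lra.
    set (u' := vscal (mkC (/ nrm u) 0) u).
    assert (Hu' : inA0 u') by (apply A0_scal; auto).
    assert (Hin : RE (Re (L u'))).
    { exists u'. split; auto. split; auto. unfold u'. rewrite n2_scal by auto. simpl.
      rewrite <- nrm_sq by auto. right. field. lra. }
    destruct Msup_lub as [U _]. specialize (U _ Hin).
    unfold u' in U. rewrite Lscal in U by auto. simpl in U.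
    replace (/ nrm u * Re (L u) - 0 * Im (L u)) with (Re (L u) / nrm u) in U by (field; lra).
    apply (Rmult_le_compat_r (nrm u)) in U; [|lra].
    replace (Re (L u) / nrm u * nrm u) with (Re (L u)) in U by (field; lra). lra.
Qed.

Definition epn (n : nat) : R := / (INR n + 1).
Lemma epn_pos n : 0 < epn n.
Proof. unfold epn. apply Rinv_0_lt_compat. pose proof (pos_INR n). lra. Qed.

Lemma near_sup n : exists x, inA0 x /\ n2 x <= 1 /\ Msup - epn n < Re (L x).
Proof.
  apply NNPP. intro N.
  destruct Msup_lub as [_ Lst].
  assert (UB : is_upper_bound RE (Msup - epn n)).
  { intros r [h [Hh [Hn ->]]]. apply Rnot_lt_le. intro C. apply N. exists h. auto. }
  specialize (Lst _ UB). pose proof (epn_pos n). lra.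
Qed.

Definition xs (n : nat) : Q :=
  epsilon (inhabits vzero) (fun x => inA0 x /\ n2 x <= 1 /\ Msup - epn n < Re (L x)).

Lemma xs_spec n : inA0 (xs n) /\ n2 (xs n) <= 1 /\ Msup - epn n < Re (L (xs n)).
Proof. unfold xs. apply epsilon_spec. apply near_sup. Qed.

Definition ys (n : nat) : Q := vscal (mkC Msup 0) (xs n).

Lemma ys_A0 n : inA0 (ys n).
Proof. apply A0_scal, xs_spec. Qed.

Lemma xs_diff m n : Msup * Msup * n2 (vsub (xs m) (xs n)) <= 4 * Msup * (epn m + epn n).
Proof.
  destruct (xs_spec m) as [Am [Nm Lm]]. destruct (xs_spec n) as [An [Nn Ln]].
  pose proof (n2_parallel _ _ Am An) as P.
  pose proof (LM _ (A0_add _ _ Am An)) as LMs. rewrite Ladd in LMs by auto. simpl in LMs.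
  pose proof (nrm_sq _ (A0_add _ _ Am An)) as S.
  pose proof (nrm_ge0 (vadd (xs m) (xs n))).
  pose proof (n2_ge0 _ (A0_sub _ _ Am An)).
  pose proof (n2_ge0 _ (A0_add _ _ Am An)).
  pose proof Msup_ge0. pose proof (epn_pos m). pose proof (epn_pos n).
  set (s := nrm (vadd (xs m) (xs n))) in *.
  set (D := n2 (vsub (xs m) (xs n))) in *.
  assert (D <= 4 - s * s) by lra.
  assert (Ms : 2 * Msup - (epn m + epn n) < Msup * s) by lra.
  set (d := epn m + epn n) in *.
  destruct (Rle_dec 0 (2 * Msup - d)) as [C|C].
  - assert ((2 * Msup - d) * (2 * Msup - d) <= (Msup * s) * (Msup * s)) by (apply Rmult_le_compat; lra).
    assert (Msup * Msup * D <= Msup * Msup * (4 - s * s)) by (apply Rmult_le_compat_l; nra).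
    nra.
  - assert (D <= 4) by lra.
    assert (Msup * Msup * D <= Msup * Msup * 4) by (apply Rmult_le_compat_l; nra).
    nra.
Qed.

Lemma ys_cauchy : cauchyV ys.
Proof.
  intros eps Heps. pose proof Msup_ge0.
  destruct (eps_nat (eps / (8 * Msup + 1))) as [N HN].
  { apply Rdiv_lt_0_compat; lra. }
  exists N. intros m n Hm Hn.
  unfold ys. rewrite <- vscal_sub. rewrite n2_scal by (apply A0_sub; apply xs_spec). simpl.
  pose proof (xs_diff m n). specialize (HN m Hm) as Em. specialize (HN n Hn) as En.
  fold (epn m) in Em. fold (epn n) in En.
  pose proof (epn_pos m). pose proof (epn_pos n).
  assert (4 * Msup * (epn m + epn n) <= 4 * Msup * (2 * (eps / (8 * Msup + 1)))) by nra.
  assert (4 * Msup * (2 * (eps / (8 * Msup + 1))) < eps).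
  { replace (4 * Msup * (2 * (eps / (8 * Msup + 1)))) with (eps * (8 * Msup / (8 * Msup + 1))) by (field; lra).
    assert (8 * Msup / (8 * Msup + 1) < 1).
    { apply (Rmult_lt_reg_r (8 * Msup + 1)). lra. unfold Rdiv. rewrite Rmult_assoc, Rinv_l by lra. lra. }
    nra. }
  replace ((Msup * Msup + 0 * 0) * n2 (vsub (xs m) (xs n))) with (Msup * Msup * n2 (vsub (xs m) (xs n))) by ring.
  lra.
Qed.

Lemma var_ineq h n t : inA0 h ->
  t * (Re (L h) - Msup * Re (ip h (xs n))) < epn n + Msup * t * t * n2 h / 2.
Proof.
  intro Hh. destruct (xs_spec n) as [Ax [Nx Lx]].
  set (x := xs n) in *.
  set (u := vadd x (vscal (mkC t 0) h)).
  assert (Au : inA0 u) by (apply A0_add; auto; apply A0_scal; auto).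
  pose proof (LM u Au) as LMu. unfold u in LMu. rewrite Ladd, Lscal in LMu by (auto; apply A0_scal; auto).
  simpl in LMu.
  assert (En : n2 u = n2 x + 2 * t * Re (ip h x) + t * t * n2 h).
  { unfold n2, u. rewrite ip_expand by auto. rewrite (ip_sym h x) by auto. simpl.
    rewrite (ip_im0 h Hh). ring. }
  pose proof (n2_ge0 u Au). pose proof (n2_ge0 h Hh).
  set (z := 1 + 2 * t * Re (ip h x) + t * t * n2 h).
  assert (Hz : n2 u <= z) by (unfold z; lra).
  assert (nrm u <= 1 + t * Re (ip h x) + t * t * n2 h / 2).
  { unfold nrm. apply Rle_trans with (sqrt z). apply sqrt_le_1_alt; auto.
    apply Rle_trans with ((1 + z) / 2). apply sqrt_le_half. lra. unfold z. lra. }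
  pose proof Msup_ge0.
  assert (Msup * nrm u <= Msup * (1 + t * Re (ip h x) + t * t * n2 h / 2)) by (apply Rmult_le_compat_l; auto).
  fold x in Lx. unfold u in *. nra.
Qed.

Lemma re_conv h : inA0 h -> Un_cv (fun n => Re (ip h (ys n))) (Re (L h)).
Proof.
  intros Hh eta Heta. pose proof Msup_ge0. pose proof (n2_ge0 h Hh).
  set (K := Msup * n2 h).
  assert (HK : 0 <= K) by (unfold K; nra).
  set (dl := eta / (2 * (K + 1))).
  assert (Hdl : 0 < dl) by (unfold dl; apply Rdiv_lt_0_compat; lra).
  assert (Kd : K * dl < eta / 2).
  { unfold dl. replace (K * (eta / (2 * (K + 1)))) with ((eta / 2) * (K / (K + 1))) by (field; lra).
    assert (K / (K + 1) < 1).
    { apply (Rmult_lt_reg_r (K + 1)). lra. unfold Rdiv. rewrite Rmult_assoc, Rinv_l by lra. lra. }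
    nra. }
  destruct (eps_nat (eta * dl / 2)) as [N HN]. { nra. }
  exists N. intros n Hn. specialize (HN n Hn). fold (epn n) in HN.
  unfold Rdist, ys. rewrite ip_scalr by auto. simpl.
  replace (Msup * Re (ip h (xs n)) - - 0 * Im (ip h (xs n)) - Re (L h))
    with (- (Re (L h) - Msup * Re (ip h (xs n)))) by ring.
  rewrite Rabs_Ropp.
  pose proof (var_ineq h n dl Hh) as P1. pose proof (var_ineq h n (- dl) Hh) as P2.
  set (A := Re (L h) - Msup * Re (ip h (xs n))) in *.
  assert (E1 : Msup * dl * dl * n2 h / 2 = K * dl * dl / 2) by (unfold K; field).
  assert (E2 : Msup * - dl * - dl * n2 h / 2 = K * dl * dl / 2) by (unfold K; field).
  rewrite E1 in P1. rewrite E2 in P2.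
  assert (B : epn n + K * dl * dl / 2 < eta * dl).
  { assert (K * dl * dl / 2 < eta / 2 * dl) by nra. lra. }
  apply Rabs_def1.
  - apply (Rmult_lt_reg_l dl); auto. lra.
  - apply (Rmult_lt_reg_l dl); auto. lra.
Qed.

Lemma riesz_conv h : inA0 h -> clim (fun n => ip h (ys n)) (L h).
Proof.
  intro Hh. split.
  - apply re_conv; auto.
  - set (h' := vscal (mkC 0 (-1)) h).
    assert (Ah : inA0 h') by (apply A0_scal; auto).
    pose proof (re_conv h' Ah) as R'. unfold h' in R'. rewrite Lscal in R' by auto.
    simpl in R'. replace (0 * Re (L h) - -1 * Im (L h)) with (Im (L h)) in R' by ring.
    eapply Un_cv_ext; [|exact R']. intro n. simpl. rewrite ip_scall by apply ys_A0. simpl. ring.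
Qed.

Lemma riesz0 :
  exists y : nat -> Q, (forall n, inA0 (y n)) /\ cauchyV y /\
    forall h, inA0 h -> clim (fun n => ip h (y n)) (L h).
Proof.
  exists ys. split; [|split].
  - apply ys_A0.
  - apply ys_cauchy.
  - apply riesz_conv.
Qed.

End Riesz.

Lemma riesz (L : Q -> Cx) (g : R) : 0 <= g ->
  (forall x y, inA0 x -> inA0 y -> L (vadd x y) = Cadd (L x) (L y)) ->
  (forall k x, inA0 x -> L (vscal k x) = Cmul k (L x)) ->
  (forall h, inA0 h -> Cabs (L h) <= g * nrm h) ->
  exists y : nat -> Q, (forall n, inA0 (y n)) /\ cauchyV y /\
    forall h, inA0 h -> clim (fun n => ip h (y n)) (L h).
Proof. intros; eapply riesz0; eauto. Qed.

Lemma nrm_lt x eps : inA0 x -> 0 < eps -> n2 x < eps * eps -> nrm x < eps.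
Proof.
  intros Hx He' Hn. unfold nrm. rewrite <- (sqrt_Rsqr eps) by lra.
  apply sqrt_lt_1_alt. split. apply n2_ge0; auto. unfold Rsqr; auto.
Qed.

Lemma cauchy_nrm y : (forall n, inA0 (y n)) -> cauchyV y ->
  forall eps, 0 < eps -> exists N, forall m n, (N <= m)%nat -> (N <= n)%nat -> nrm (vsub (y m) (y n)) < eps.
Proof.
  intros Hy Hc eps He'. destruct (Hc (eps * eps)) as [N HN]. nra.
  exists N. intros. apply nrm_lt; auto. apply A0_sub; auto.
Qed.

Lemma cauchy_bounded y : (forall n, inA0 (y n)) -> cauchyV y -> exists B, 0 <= B /\ forall n, nrm (y n) <= B.
Proof.
  intros Hy Hc. destruct (Hc 1) as [N HN]. lra.
  destruct (bounded_seq (fun n => n2 (y n)) N) as [B0 HB0].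
  set (B2 := Rmax B0 (2 + 2 * n2 (y N))).
  exists (sqrt B2). split. apply sqrt_pos. intro n. unfold nrm. apply sqrt_le_1_alt.
  destruct (Nat.lt_ge_cases n N) as [L|L].
  - apply Rle_trans with B0. apply HB0; auto. apply Rmax_l.
  - apply Rle_trans with (2 + 2 * n2 (y N)); [|apply Rmax_r].
    rewrite <- (vsub_add_cancel Q (y n) (y N)).
    pose proof (n2_add_le (vsub (y n) (y N)) (y N) (A0_sub _ _ (Hy n) (Hy N)) (Hy N)).
    specialize (HN n N L (le_n N)). lra.
Qed.

Lemma ip_lim_ex y h : (forall n, inA0 (y n)) -> cauchyV y -> inA0 h ->
  exists l, clim (fun n => ip (y n) h) l.
Proof.
  intros Hy Hc Hh. apply clim_of_cauchy. intros eps He'.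
  pose proof (nrm_ge0 h).
  destruct (cauchy_nrm y Hy Hc (eps / (nrm h + 1))) as [N HN]. apply Rdiv_lt_0_compat; lra.
  exists N. intros m n Hm Hn. rewrite <- ip_subl by auto.
  eapply Rle_lt_trans. apply CSV; auto. apply A0_sub; auto.
  specialize (HN m n Hm Hn). pose proof (nrm_ge0 (vsub (y m) (y n))).
  apply Rle_lt_trans with (eps / (nrm h + 1) * nrm h). nra.
  replace (eps / (nrm h + 1) * nrm h) with (eps * (nrm h / (nrm h + 1))) by (field; lra).
  assert (nrm h / (nrm h + 1) < 1).
  { apply (Rmult_lt_reg_r (nrm h + 1)). lra. unfold Rdiv. rewrite Rmult_assoc, Rinv_l by lra. lra. }
  nra.
Qed.

Definition repr (y : nat -> Q) (F : Q -> Cx) : Prop :=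
  (forall n, inA0 (y n)) /\ cauchyV y /\
  (forall h, inA0 h -> clim (fun n => ip (y n) h) (F h)) /\ (forall h, ~ inA0 h -> F h = C0).

Definition mkF (y : nat -> Q) : Q -> Cx := fun h =>
  if excluded_middle_informative (inA0 h) then climv (fun n => ip (y n) h) else C0.

Lemma repr_mk y : (forall n, inA0 (y n)) -> cauchyV y -> repr y (mkF y).
Proof.
  intros Hy Hc. split; [auto|split; [auto|split]].
  - intros h Hh. unfold mkF. destruct (excluded_middle_informative (inA0 h)); [|contradiction].
    destruct (ip_lim_ex y h Hy Hc Hh) as [l Hl]. rewrite (climv_spec _ l Hl). auto.
  - intros h Hh. unfold mkF. destruct (excluded_middle_informative (inA0 h)); [contradiction|auto].
Qed.

Definition isH (F : Q -> Cx) : Prop := exists y, repr y F.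
Definition Hs : Type := {F : Q -> Cx | isH F}.
Definition FF (u : Hs) : Q -> Cx := proj1_sig u.

Lemma Hs_eq (u v : Hs) : FF u = FF v -> u = v.
Proof.
  destruct u as [f pf], v as [g pg]. unfold FF; simpl. intro E. subst g.
  f_equal. apply proof_irrelevance.
Qed.

Lemma repr_zero : repr (fun _ => vzero) (fun _ => C0).
Proof.
  split; [intros; apply A0_zero|split; [|split]].
  - intros eps He'. exists 0%nat. intros. rewrite vsub_self. unfold n2. rewrite ip_zero_l. simpl. lra.
  - intros h Hh. eapply clim_ext; [|apply clim_const]. intro n. simpl. rewrite ip_zero_l. auto.
  - auto.
Qed.

Lemma repr_add y z F G : repr y F -> repr z G ->
  repr (fun n => vadd (y n) (z n)) (fun h => Cadd (F h) (G h)).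
Proof.
  intros [Ay [Cy [Ly Oy]]] [Az [Cz [Lz Oz]]].
  split; [intro n; apply A0_add; auto|split; [|split]].
  - intros eps He'. destruct (Cy (eps / 4)) as [N1 HN1]. lra. destruct (Cz (eps / 4)) as [N2 HN2]. lra.
    exists (max N1 N2). intros m n Hm Hn. rewrite vsub_addadd.
    eapply Rle_lt_trans. apply n2_add_le; apply A0_sub; auto.
    specialize (HN1 m n ltac:(lia) ltac:(lia)). specialize (HN2 m n ltac:(lia) ltac:(lia)). lra.
  - intros h Hh. eapply clim_ext; [|apply clim_add; [apply Ly|apply Lz]; auto].
    intro n. simpl. rewrite ip_addl by auto. auto.
  - intros h Hh. rewrite Oy, Oz by auto. cxeq.
Qed.

Lemma repr_scal k y F : repr y F -> repr (fun n => vscal k (y n)) (fun h => Cmul k (F h)).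
Proof.
  intros [Ay [Cy [Ly Oy]]].
  split; [intro n; apply A0_scal; auto|split; [|split]].
  - intros eps He'. set (K := Re k * Re k + Im k * Im k).
    assert (HK : 0 <= K) by (unfold K; nra).
    destruct (Cy (eps / (K + 1))) as [N HN]. apply Rdiv_lt_0_compat; lra.
    exists N. intros m n Hm Hn. rewrite <- vscal_sub, n2_scal by (apply A0_sub; auto). fold K.
    specialize (HN m n Hm Hn). pose proof (n2_ge0 _ (A0_sub _ _ (Ay m) (Ay n))).
    apply Rle_lt_trans with (K * (eps / (K + 1))). nra.
    replace (K * (eps / (K + 1))) with (eps * (K / (K + 1))) by (field; lra).
    assert (K / (K + 1) < 1).
    { apply (Rmult_lt_reg_r (K + 1)). lra. unfold Rdiv. rewrite Rmult_assoc, Rinv_l by lra. lra. }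
    nra.
  - intros h Hh. eapply clim_ext; [|apply clim_scal; apply Ly; auto].
    intro n. simpl. rewrite ip_scall by auto. auto.
  - intros h Hh. rewrite Oy by auto. cxeq.
Qed.

Definition lamF (b : Q) : Q -> Cx := fun h =>
  if excluded_middle_informative (inA0 h) then ip b h else C0.

Lemma repr_const x : inA0 x -> repr (fun _ => x) (lamF x).
Proof.
  intro Hx. split; [auto|split; [|split]].
  - intros eps He'. exists 0%nat. intros. rewrite vsub_self. unfold n2. rewrite ip_zero_l. simpl. lra.
  - intros h Hh. unfold lamF. destruct (excluded_middle_informative (inA0 h)); [|contradiction].
    apply clim_const.
  - intros h Hh. unfold lamF. destruct (excluded_middle_informative (inA0 h)); [contradiction|auto].
Qed.

Lemma ip_addl2 x1 x2 y : inA0 x1 -> inA0 x2 -> ip (vadd x1 x2) y = Cadd (ip x1 y) (ip x2 y).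
Proof. intros. unfold ip. rewrite qmulDr by (right; auto). apply wadd. Qed.
Lemma ip_scall2 k x y : inA0 x -> ip (vscal k x) y = Cmul k (ip x y).
Proof. intro. unfold ip. rewrite qmulZr by (right; auto). apply wscal. Qed.

Lemma isH_lam b : isH (lamF b).
Proof.
  destruct (ip_bound b) as [g [Hg Hb]].
  destruct (riesz (fun h => ip h b) g ltac:(lra)) as [y [Ay [Cy Ly]]].
  { intros. apply ip_addl2; auto. }
  { intros. apply ip_scall2; auto. }
  { auto. }
  exists y. split; [auto|split; [auto|split]].
  - intros h Hh. unfold lamF. destruct (excluded_middle_informative (inA0 h)); [|contradiction].
    pose proof (clim_conj _ _ (Ly h Hh)) as P. rewrite (ip_sym b h Hh) in P.
    replace (Cconj (Cconj (ip b h))) with (ip b h) in P by cxeq.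
    eapply clim_ext; [|exact P]. intro n. simpl. rewrite (ip_sym (y n) h) by auto. cxeq.
  - intros h Hh. unfold lamF. destruct (excluded_middle_informative (inA0 h)); [contradiction|auto].
Qed.

Lemma isH_zero : isH (fun _ => C0).
Proof. exists (fun _ => vzero). apply repr_zero. Qed.
Lemma isH_add (u v : Hs) : isH (fun h => Cadd (FF u h) (FF v h)).
Proof. destruct (proj2_sig u) as [y Hy], (proj2_sig v) as [z Hz]. exists (fun n => vadd (y n) (z n)).
  apply repr_add; auto. Qed.
Lemma isH_scal k (u : Hs) : isH (fun h => Cmul k (FF u h)).
Proof. destruct (proj2_sig u) as [y Hy]. exists (fun n => vscal k (y n)). apply repr_scal; auto. Qed.

Definition Hzero : Hs := exist _ (fun _ => C0) isH_zero.
Definition Hadd (u v : Hs) : Hs := exist _ (fun h => Cadd (FF u h) (FF v h)) (isH_add u v).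
Definition Hscal k (u : Hs) : Hs := exist _ (fun h => Cmul k (FF u h)) (isH_scal k u).
Definition Hopp (u : Hs) : Hs := Hscal (mkC (-1) 0) u.

Ltac heq := apply Hs_eq; apply functional_extensionality; intro; unfold FF; simpl; unfold FF; cxeq.

Lemma HaddA u v w0 : Hadd u (Hadd v w0) = Hadd (Hadd u v) w0. Proof. heq. Qed.
Lemma HaddC u v : Hadd u v = Hadd v u. Proof. heq. Qed.
Lemma Hadd0 u : Hadd u Hzero = u. Proof. heq. Qed.
Lemma HaddN u : Hadd u (Hopp u) = Hzero. Proof. heq. Qed.
Lemma Hscal1 u : Hscal C1 u = u. Proof. heq. Qed.
Lemma HscalA a b u : Hscal a (Hscal b u) = Hscal (Cmul a b) u. Proof. heq. Qed.
Lemma HscalDr a u v : Hscal a (Hadd u v) = Hadd (Hscal a u) (Hscal a v). Proof. heq. Qed.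
Lemma HscalDl a b u : Hscal (Cadd a b) u = Hadd (Hscal a u) (Hscal b u). Proof. heq. Qed.

Definition HV : CVS := {| vcar := Hs; vadd := Hadd; vzero := Hzero; vopp := Hopp; vscal := Hscal;
  vaddA := HaddA; vaddC := HaddC; vadd0 := Hadd0; vaddN := HaddN; vscal1 := Hscal1; vscalA := HscalA;
  vscalDr := HscalDr; vscalDl := HscalDl |}.

Definition rp (u : Hs) : nat -> Q := epsilon (inhabits (fun _ => vzero)) (fun y => repr y (FF u)).
Lemma rp_spec u : repr (rp u) (FF u).
Proof. unfold rp. apply epsilon_spec. apply (proj2_sig u). Qed.

Lemma ipip_ex y z : (forall n, inA0 (y n)) -> cauchyV y -> (forall n, inA0 (z n)) -> cauchyV z ->
  exists l, clim (fun n => ip (y n) (z n)) l.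
Proof.
  intros Ay Cy Az Cz. apply clim_of_cauchy. intros eps He'.
  destruct (cauchy_bounded y Ay Cy) as [By [HBy Hy]].
  destruct (cauchy_bounded z Az Cz) as [Bz [HBz Hz]].
  destruct (cauchy_nrm y Ay Cy (eps / (2 * (Bz + 1)))) as [N1 HN1]. apply Rdiv_lt_0_compat; lra.
  destruct (cauchy_nrm z Az Cz (eps / (2 * (By + 1)))) as [N2 HN2]. apply Rdiv_lt_0_compat; lra.
  exists (max N1 N2). intros m n Hm Hn.
  replace (Cadd (ip (y m) (z m)) (Copp (ip (y n) (z n)))) with
    (Cadd (Cadd (ip (y m) (z m)) (Copp (ip (y n) (z m)))) (Cadd (ip (y n) (z m)) (Copp (ip (y n) (z n)))))
    by (unfold Copp; cxeq).
  rewrite <- ip_subl, <- ip_subr by auto.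
  eapply Rle_lt_trans. apply Cabs_triangle.
  pose proof (CSV (vsub (y m) (y n)) (z m) (A0_sub _ _ (Ay m) (Ay n)) (Az m)).
  pose proof (CSV (y n) (vsub (z m) (z n)) (Ay n) (A0_sub _ _ (Az m) (Az n))).
  specialize (HN1 m n ltac:(lia) ltac:(lia)). specialize (HN2 m n ltac:(lia) ltac:(lia)).
  pose proof (Hy n). pose proof (Hz m). pose proof (nrm_ge0 (y n)). pose proof (nrm_ge0 (z m)).
  pose proof (nrm_ge0 (vsub (y m) (y n))). pose proof (nrm_ge0 (vsub (z m) (z n))).
  assert (A1 : nrm (vsub (y m) (y n)) * nrm (z m) <= eps / (2 * (Bz + 1)) * Bz) by nra.
  assert (A2 : nrm (y n) * nrm (vsub (z m) (z n)) <= By * (eps / (2 * (By + 1)))) by nra.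
  assert (A3 : eps / (2 * (Bz + 1)) * Bz < eps / 2).
  { replace (eps / (2 * (Bz + 1)) * Bz) with (eps / 2 * (Bz / (Bz + 1))) by (field; lra).
    assert (Bz / (Bz + 1) < 1).
    { apply (Rmult_lt_reg_r (Bz + 1)). lra. unfold Rdiv. rewrite Rmult_assoc, Rinv_l by lra. lra. }
    nra. }
  assert (A4 : By * (eps / (2 * (By + 1))) < eps / 2).
  { replace (By * (eps / (2 * (By + 1)))) with (eps / 2 * (By / (By + 1))) by (field; lra).
    assert (By / (By + 1) < 1).
    { apply (Rmult_lt_reg_r (By + 1)). lra. unfold Rdiv. rewrite Rmult_assoc, Rinv_l by lra. lra. }
    nra. }
  lra.
Qed.

Lemma approx z F y : repr z F -> (forall n, inA0 (y n)) -> cauchyV y ->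
  clim (fun n => Cadd (F (y n)) (Copp (ip (z n) (y n)))) C0.
Proof.
  intros [Az [Cz [Lz Oz]]] Ay Cy.
  destruct (cauchy_bounded y Ay Cy) as [By [HBy Hy]].
  apply clim0_le. intros eps He'.
  destruct (cauchy_nrm z Az Cz (eps / (By + 1))) as [N HN]. apply Rdiv_lt_0_compat; lra.
  exists N. intros n Hn.
  assert (B : forall m, (N <= m)%nat -> Cabs (Cadd (ip (z m) (y n)) (Copp (ip (z n) (y n)))) <= eps).
  { intros m Hm. rewrite <- ip_subl by auto.
    eapply Rle_trans. apply CSV; auto. apply A0_sub; auto.
    specialize (HN m n Hm Hn). pose proof (Hy n). pose proof (nrm_ge0 (y n)).
    pose proof (nrm_ge0 (vsub (z m) (z n))).
    apply Rle_trans with (eps / (By + 1) * By). nra.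
    replace (eps / (By + 1) * By) with (eps * (By / (By + 1))) by (field; lra).
    assert (By / (By + 1) <= 1).
    { apply (Rmult_le_reg_r (By + 1)). lra. unfold Rdiv. rewrite Rmult_assoc, Rinv_l by lra. lra. }
    nra. }
  destruct (Lz (y n) (Ay n)) as [LR LI].
  split; simpl.
  - replace (Re (F (y n)) + - Re (ip (z n) (y n))) with (Re (F (y n)) - Re (ip (z n) (y n))) by ring.
    apply (lim_le _ _ _ _ N LR). intros m Hm. specialize (B m Hm).
    pose proof (Re_le_Cabs (Cadd (ip (z m) (y n)) (Copp (ip (z n) (y n))))). simpl in H. unfold Rminus. lra.
  - replace (Im (F (y n)) + - Im (ip (z n) (y n))) with (Im (F (y n)) - Im (ip (z n) (y n))) by ring.
    apply (lim_le _ _ _ _ N LI). intros m Hm. specialize (B m Hm).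
    pose proof (Im_le_Cabs (Cadd (ip (z m) (y n)) (Copp (ip (z n) (y n))))). simpl in H. unfold Rminus. lra.
Qed.

Definition Hip (u v : Hs) : Cx := climv (fun n => ip (rp u n) (rp v n)).

Lemma clim_comb (a b c u : nat -> Cx) l : clim a C0 -> clim b C0 -> clim c l ->
  (forall n, u n = Cadd (Cadd (a n) (b n)) (c n)) -> clim u l.
Proof.
  intros A B C E. eapply clim_ext. intro n. symmetry. apply E.
  replace l with (Cadd C0 l) by cxeq. apply clim_add; auto. apply clim0_add; auto.
Qed.

Lemma inner_any u v z y : repr z (FF u) -> repr y (FF v) -> clim (fun n => ip (z n) (y n)) (Hip u v).
Proof.
  intros Rz Ry. pose proof (rp_spec u) as Rr. pose proof (rp_spec v) as Rs.
  set (r := rp u) in *. set (s := rp v) in *.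
  pose proof Rz as [Az [Cz _]]. pose proof Ry as [Ay [Cy _]]. pose proof Rr as [Ar [Cr _]]. pose proof Rs as [As [Cs _]].
  assert (A : clim (fun n => ip (r n) (s n)) (Hip u v)).
  { destruct (ipip_ex r s Ar Cr As Cs) as [l Hl]. unfold Hip. fold r s. rewrite (climv_spec _ l Hl). auto. }
  pose proof (approx z (FF u) y Rz Ay Cy) as B1.
  pose proof (approx r (FF u) y Rr Ay Cy) as B2.
  pose proof (approx y (FF v) r Ry Ar Cr) as C1.
  pose proof (approx s (FF v) r Rs Ar Cr) as C2.
  eapply (clim_comb _ _ _ _ _ (clim0_add _ _ B2 (clim0_opp _ B1))
            (clim0_conj _ (clim0_add _ _ C2 (clim0_opp _ C1))) A).
  intro n. simpl.
  rewrite (ip_sym (y n) (r n) (Ar n)), (ip_sym (s n) (r n) (Ar n)). unfold Copp. cxeq.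
Qed.

Lemma Hip_Dl (u u' v : Hs) : Hip (Hadd u u') v = Cadd (Hip u v) (Hip u' v).
Proof.
  pose proof (rp_spec u) as Ru. pose proof (rp_spec u') as Ru'. pose proof (rp_spec v) as Rv.
  pose proof (inner_any (Hadd u u') v _ _ (repr_add _ _ _ _ Ru Ru') Rv) as P.
  pose proof (clim_add _ _ _ _ (inner_any u v _ _ Ru Rv) (inner_any u' v _ _ Ru' Rv)) as P'.
  eapply clim_unique; [exact P|]. eapply clim_ext; [|exact P'].
  intro n. simpl. rewrite ip_addl by apply (proj1 Rv). auto.
Qed.

Lemma Hip_Zl k (u v : Hs) : Hip (Hscal k u) v = Cmul k (Hip u v).
Proof.
  pose proof (rp_spec u) as Ru. pose proof (rp_spec v) as Rv.
  pose proof (inner_any (Hscal k u) v _ _ (repr_scal k _ _ Ru) Rv) as P.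
  pose proof (clim_scal k _ _ (inner_any u v _ _ Ru Rv)) as P'.
  eapply clim_unique; [exact P|]. eapply clim_ext; [|exact P'].
  intro n. simpl. rewrite ip_scall by apply (proj1 Rv). auto.
Qed.

Lemma Hip_sym (u v : Hs) : Hip v u = Cconj (Hip u v).
Proof.
  pose proof (rp_spec u) as Ru. pose proof (rp_spec v) as Rv.
  pose proof (inner_any v u _ _ Rv Ru) as P.
  pose proof (clim_conj _ _ (inner_any u v _ _ Ru Rv)) as P'.
  eapply clim_unique; [exact P|]. eapply clim_ext; [|exact P'].
  intro n. simpl. rewrite (ip_sym (rp u n) (rp v n)) by apply (proj1 Rv). auto.
Qed.

Lemma Hip_pos (v : Hs) : Cnonneg (Hip v v).
Proof.
  pose proof (rp_spec v) as Rv. destruct (inner_any v v _ _ Rv Rv) as [PR PI].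
  split.
  - eapply UL_sequence; [exact PI|]. eapply Un_cv_ext; [|apply (Un_cv_const 0)].
    intro n. simpl. rewrite ip_im0 by apply (proj1 Rv). auto.
  - eapply Un_cv_ge0; [exact PR|]. intro n. apply n2_ge0, (proj1 Rv).
Qed.

Lemma Hip_def (v : Hs) : Hip v v = C0 -> v = Hzero.
Proof.
  intro E. pose proof (rp_spec v) as Rv. pose proof (inner_any v v _ _ Rv Rv) as P. rewrite E in P.
  destruct P as [PR _]. destruct Rv as [Ar [Cr [Lr Or]]].
  apply Hs_eq. apply functional_extensionality. intro h. unfold FF at 2. simpl.
  destruct (classic (inA0 h)) as [Hh|Hh]; [|apply Or; auto].
  eapply clim_unique; [apply Lr; auto|].
  apply clim0_le. intros eps He'. pose proof (nrm_ge0 h).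
  set (dl := eps / (nrm h + 1)).
  assert (Hdl : 0 < dl) by (unfold dl; apply Rdiv_lt_0_compat; lra).
  destruct (PR (dl * dl)) as [N HN]. nra.
  exists N. intros n Hn. specialize (HN n Hn). unfold Rdist in HN. simpl in HN.
  rewrite Rminus_0_r in HN. fold (n2 (rp v n)) in HN.
  assert (Nn : nrm (rp v n) < dl).
  { apply nrm_lt; auto. pose proof (Rle_abs (n2 (rp v n))). lra. }
  pose proof (CSV (rp v n) h (Ar n) Hh) as C.
  pose proof (nrm_ge0 (rp v n)).
  assert (B : Cabs (ip (rp v n) h) <= eps).
  { apply Rle_trans with (dl * nrm h). nra.
    unfold dl. replace (eps / (nrm h + 1) * nrm h) with (eps * (nrm h / (nrm h + 1))) by (field; lra).
    assert (nrm h / (nrm h + 1) <= 1).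
    { apply (Rmult_le_reg_r (nrm h + 1)). lra. unfold Rdiv. rewrite Rmult_assoc, Rinv_l by lra. lra. }
    nra. }
  pose proof (Re_le_Cabs (ip (rp v n) h)). pose proof (Im_le_Cabs (ip (rp v n) h)). lra.
Qed.

Lemma Hip_sym' (u v : HV) : Hip v u = Cconj (Hip u v).
Proof. apply Hip_sym. Qed.

Definition lam (b : Q) : Hs := exist _ (lamF b) (isH_lam b).

Lemma lam_add a b : lam (vadd a b) = Hadd (lam a) (lam b).
Proof.
  apply Hs_eq. apply functional_extensionality. intro h. unfold FF; simpl. unfold FF, lamF; simpl.
  destruct (excluded_middle_informative (inA0 h)). rewrite ip_addl; auto. cxeq.
Qed.

Lemma lam_scal k a : lam (vscal k a) = Hscal k (lam a).
Proof.
  apply Hs_eq. apply functional_extensionality. intro h. unfold FF; simpl. unfold FF, lamF; simpl.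
  destruct (excluded_middle_informative (inA0 h)). rewrite ip_scall; auto. cxeq.
Qed.

Lemma lam_sub a b : lam (vsub a b) = @vsub HV (lam a) (lam b).
Proof. unfold vsub at 1. rewrite vopp_scal, lam_add, lam_scal. reflexivity. Qed.

Lemma lam_zero : lam vzero = Hzero.
Proof. rewrite <- (vscal0 Q vzero), lam_scal. apply Hs_eq. apply functional_extensionality. intro h.
  unfold FF; simpl. cxeq. Qed.

Lemma Hip_lam_r u h : inA0 h -> Hip u (lam h) = FF u h.
Proof.
  intro Hh. pose proof (rp_spec u) as Ru.
  pose proof (inner_any u (lam h) _ _ Ru (repr_const h Hh)) as P.
  eapply clim_unique; [exact P|]. exact (proj1 (proj2 (proj2 Ru)) h Hh).
Qed.

Lemma Hip_lam b h : inA0 h -> Hip (lam b) (lam h) = ip b h.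
Proof.
  intro Hh. rewrite Hip_lam_r by auto. unfold FF, lam, lamF; simpl.
  destruct (excluded_middle_informative (inA0 h)); [auto|contradiction].
Qed.

Definition Hn (u : Hs) : R := @ipnorm HV Hip u.

Lemma Hn_tri (u v : Hs) : Hn (Hadd u v) <= Hn u + Hn v.
Proof. unfold Hn. apply (ipnorm_triangle_G HV Hip Hip_Dl Hip_Zl Hip_sym' Hip_pos u v). Qed.

Lemma Hn_subsym (u v : HV) : Hn (vsub u v) = Hn (vsub v u).
Proof. unfold Hn. eapply ipnorm_sub_sym_G; try exact Hip_Dl; try exact Hip_Zl; try exact Hip_sym'; try exact Hip_pos. Qed.

Lemma Hn_tri3 (a b c : HV) : Hn (vsub a c) <= Hn (vsub a b) + Hn (vsub b c).
Proof. rewrite (vsub_add HV a b c). apply Hn_tri. Qed.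

Lemma Hn_sq (u : HV) : Hn u * Hn u = Re (Hip u u).
Proof. unfold Hn, ipnorm. apply sqrt_sqrt. apply Hip_pos. Qed.

Lemma Hn_ge0 u : 0 <= Hn u.
Proof. apply sqrt_pos. Qed.

Lemma n2_lam a b : inA0 a -> inA0 b -> n2 (vsub a b) = Hn (@vsub HV (lam a) (lam b)) * Hn (@vsub HV (lam a) (lam b)).
Proof.
  intros. rewrite Hn_sq, <- lam_sub. rewrite Hip_lam by (apply A0_sub; auto). reflexivity.
Qed.

Lemma dens u z : repr z (FF u) -> forall dl, 0 < dl -> exists N, forall n, (N <= n)%nat ->
  Hn (@vsub HV u (lam (z n))) < dl.
Proof.
  intros Rz dl Hdl. pose proof Rz as [Az [Cz _]].
  destruct (Cz (dl * dl / 4)) as [N HN]. nra.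
  exists N. intros n Hn'.
  pose proof (repr_add _ _ _ _ Rz (repr_scal (mkC (-1) 0) _ _ (repr_const (z n) (Az n)))) as R2.
  pose proof (inner_any (@vsub HV u (lam (z n))) (@vsub HV u (lam (z n))) _ _ R2 R2) as [PR _].
  assert (B : Rabs (Re (Hip (@vsub HV u (lam (z n))) (@vsub HV u (lam (z n)))) - 0) <= dl * dl / 4).
  { apply (lim_le _ _ _ _ N PR). intros m Hm. simpl.
    rewrite <- (vopp_scal Q (z n)). fold (vsub (z m) (z n)). fold (n2 (vsub (z m) (z n))).
    pose proof (n2_ge0 _ (A0_sub _ _ (Az m) (Az n))). specialize (HN m n Hm Hn').
    rewrite Rminus_0_r, Rabs_right by lra. lra. }
  rewrite Rminus_0_r in B. rewrite <- Hn_sq in B.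
  pose proof (Hn_ge0 (@vsub HV u (lam (z n)))).
  rewrite Rabs_right in B by nra. nra.
Qed.

Lemma near_lam (f : nat -> HV) k : exists x, inA0 x /\ Hn (vsub (f k) (lam x)) < / (INR k + 1).
Proof.
  pose proof (rp_spec (f k)) as R.
  destruct (dens (f k) _ R (/ (INR k + 1))) as [N HN].
  { apply Rinv_0_lt_compat. pose proof (pos_INR k). lra. }
  exists (rp (f k) N). split. apply (proj1 R). apply HN. auto.
Qed.

Lemma Hcomplete (f : nat -> HV) : @ip_cauchy HV Hip f -> exists v, @ip_converges HV Hip f v.
Proof.
  intro Cf.
  set (xk := fun k => epsilon (inhabits vzero) (fun x => inA0 x /\ Hn (vsub (f k) (lam x)) < / (INR k + 1))).
  assert (Xs : forall k, inA0 (xk k) /\ Hn (vsub (f k) (lam (xk k))) < / (INR k + 1)).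
  { intro k. unfold xk. apply epsilon_spec. apply near_lam. }
  assert (Ax : forall k, inA0 (xk k)) by (intro k; apply Xs).
  assert (Cx' : cauchyV xk).
  { intros eps He'. set (dl := sqrt eps).
    assert (Hdl : 0 < dl) by (apply sqrt_lt_R0; auto).
    destruct (Cf (dl / 3)) as [N1 HN1]. lra.
    destruct (eps_nat (dl / 3)) as [N2 HN2]. lra.
    exists (max N1 N2). intros m n Hm Hn'.
    rewrite n2_lam by auto.
    assert (T : Hn (@vsub HV (lam (xk m)) (lam (xk n))) < dl).
    { eapply Rle_lt_trans. apply (Hn_tri3 _ (f m)).
      eapply Rle_lt_trans. apply Rplus_le_compat_l. apply (Hn_tri3 _ (f n)).
      rewrite Hn_subsym.
      specialize (HN1 m n ltac:(lia) ltac:(lia)). fold (Hn (vsub (f m) (f n))) in HN1.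
      destruct (Xs m) as [_ Xm]. destruct (Xs n) as [_ Xn].
      specialize (HN2 m ltac:(lia)) as E1. specialize (HN2 n ltac:(lia)) as E2. lra. }
    pose proof (Hn_ge0 (@vsub HV (lam (xk m)) (lam (xk n)))).
    assert (E : dl * dl = eps) by (apply sqrt_sqrt; lra). nra. }
  pose proof (repr_mk xk Ax Cx') as Rv.
  set (v := exist isH (mkF xk) (ex_intro _ xk Rv) : Hs).
  exists (v : HV). intros eps He'.
  destruct (eps_nat (eps / 2)) as [N1 HN1]. lra.
  destruct (dens v xk Rv (eps / 2)) as [N2 HN2]. lra.
  exists (max N1 N2). intros n Hn'.
  fold (Hn (vsub (f n) v)).
  eapply Rle_lt_trans. apply (Hn_tri3 _ (lam (xk n))).
  rewrite (Hn_subsym (lam (xk n)) v).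
  destruct (Xs n) as [_ Xn]. specialize (HN1 n ltac:(lia)). specialize (HN2 n ltac:(lia)). lra.
Qed.

Definition HH : Hilbert := {| hV := HV; inner := Hip; innerDl := Hip_Dl; innerZl := Hip_Zl;
  inner_sym := Hip_sym'; inner_pos := Hip_pos; inner_def := Hip_def; complete := Hcomplete |}.

Definition Dm (v : HH) : Prop := exists x, inA0 x /\ v = lam x.
Definition repD (v : HH) : Q := epsilon (inhabits vzero) (fun x => inA0 x /\ v = lam x).
Definition pim (a : Q) (v : HH) : HH := lam (qmul a (repD v)).

Lemma ip_subl2 x x' b : inA0 x -> inA0 x' -> ip (vsub x x') b = Cadd (ip x b) (Copp (ip x' b)).
Proof.
  intros. unfold vsub. rewrite ip_addl2 by (auto; apply A0_opp; auto).
  rewrite vopp_scal, ip_scall2 by auto. unfold Copp. cxeq.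
Qed.

Lemma Wdef a x x' : inA0 x -> inA0 x' -> lam x = lam x' -> lam (qmul a x) = lam (qmul a x').
Proof.
  intros Hx Hx' E.
  assert (N0 : n2 (vsub x x') = 0).
  { assert (F : FF (lam x) (vsub x x') = FF (lam x') (vsub x x')) by (rewrite E; auto).
    unfold FF, lam, lamF in F; simpl in F.
    destruct (excluded_middle_informative (inA0 (vsub x x'))) as [_|C]; [|exfalso; apply C, A0_sub; auto].
    unfold n2. rewrite ip_subl by (apply A0_sub; auto). rewrite F. simpl. ring. }
  apply Hs_eq. apply functional_extensionality. intro h. unfold FF, lam, lamF; simpl.
  destruct (excluded_middle_informative (inA0 h)) as [Hh|]; auto.
  set (c := qmul (qstar h) a).
  assert (Z := ip_null (vsub x x') (qstar c) (A0_sub _ _ Hx Hx') N0).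
  rewrite ip_subl2 in Z by auto.
  assert (K : forall y, inA0 y -> ip (qmul a y) h = ip y (qstar c)).
  { intros y Hy. unfold ip, c. rewrite qstarK, qmulA_xay by (auto; apply A0_star; auto). auto. }
  rewrite !K by auto.
  apply Cx_eq. apply (f_equal Re) in Z. simpl in Z. lra. apply (f_equal Im) in Z. simpl in Z. lra.
Qed.

Lemma repD_spec x : inA0 x -> inA0 (repD (lam x)) /\ lam x = lam (repD (lam x)).
Proof. intro Hx. unfold repD. apply epsilon_spec. exists x. auto. Qed.

Lemma pim_lam a x : inA0 x -> pim a (lam x) = lam (qmul a x).
Proof.
  intro Hx. destruct (repD_spec x Hx) as [A E]. unfold pim. symmetry. apply Wdef; auto.
Qed.

Lemma Dm_dense : dense_subspace Dm.
Proof.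
  split; [|split; [|split]].
  - exists vzero. split. apply A0_zero. symmetry. apply lam_zero.
  - intros u v [x [Hx ->]] [y [Hy ->]]. exists (vadd x y). split. apply A0_add; auto.
    rewrite lam_add. reflexivity.
  - intros k u [x [Hx ->]]. exists (vscal k x). split. apply A0_scal; auto. rewrite lam_scal. reflexivity.
  - intros v eps He'. pose proof (rp_spec v) as R.
    destruct (dens v _ R eps He') as [N HN]. exists (lam (rp v N)). split.
    + exists (rp v N). split; auto. apply (proj1 R).
    + apply HN. auto.
Qed.

Lemma pim_adj a u : Dm u -> is_adj Dm (pim a) u (pim (qstar a) u).
Proof.
  intros [x [Hx ->]] d [y [Hy ->]]. rewrite !pim_lam by auto.
  change (Hip (lam (qmul a y)) (lam x) = Hip (lam y) (lam (qmul (qstar a) x))).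
  rewrite Hip_lam by auto. rewrite Hip_sym, Hip_lam by auto.
  unfold ip. pose proof (H2 x y a Hx Hy) as L. rewrite !qmulA_xay in L by (auto; apply A0_star; auto).
  rewrite L. cxeq.
Qed.

Lemma adj_pim a u : Dm u -> adj Dm (pim a) u = pim (qstar a) u.
Proof. intro Hu. apply adj_eq. apply Dm_dense. apply pim_adj; auto. Qed.

Lemma pim_lin a : lin_on Dm (pim a).
Proof.
  split.
  - intros u v [x [Hx ->]] [y [Hy ->]]. change (pim a (Hadd (lam x) (lam y)) = Hadd (pim a (lam x)) (pim a (lam y))).
    rewrite <- lam_add, !pim_lam by (auto; apply A0_add; auto).
    rewrite qmulDr by (right; auto). apply lam_add.
  - intros k u [x [Hx ->]]. change (pim a (Hscal k (lam x)) = Hscal k (pim a (lam x))).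
    rewrite <- lam_scal, !pim_lam by (auto; apply A0_scal; auto).
    rewrite qmulZr by (right; auto). apply lam_scal.
Qed.

Lemma pim_Ldag a : in_Ldagger Dm (pim a).
Proof.
  split; [apply pim_lin|split].
  - apply closable_of_adj. apply Dm_dense. intros u Hu. exists (pim (qstar a) u). apply pim_adj; auto.
  - intros u Hu. exists (pim (qstar a) u). apply pim_adj; auto.
Qed.

Lemma Dm_lam x : inA0 x -> Dm (lam x).
Proof. intro. exists x; auto. Qed.

Lemma pim_star_rep : star_rep e Dm pim.
Proof.
  destruct He as [He0 Hu].
  split; [apply Dm_dense|split; [apply pim_Ldag|split; [|split; [|split; [|split]]]]].
  - intros a b d [x [Hx ->]]. rewrite !pim_lam by auto. rewrite qmulDl by (left; auto). apply lam_add.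
  - intros k a d [x [Hx ->]]. rewrite !pim_lam by auto. rewrite qmulZl by (right; auto). apply lam_scal.
  - intros a d Hd. rewrite adj_pim by auto. reflexivity.
  - intros a x Hx. split; [split|].
    + intros d [y [Hy ->]]. exists (pim a (pim x (lam y))).
      intros d' Hd'. rewrite adj_pim by auto.
      rewrite pim_lam by auto. pose proof (pim_adj (qstar a) (lam (qmul x y)) (Dm_lam _ (A0_mul _ _ Hx Hy)) d' Hd') as P.
      rewrite qstarK in P. exact P.
    + intros d [y [Hy ->]]. rewrite adj_pim by (apply Dm_lam; auto). rewrite pim_lam by auto.
      exists (lam (qmul (qstar x) (qmul (qstar a) y))).
      intros d' [z [Hz ->]]. rewrite pim_lam by auto.
      change (Hip (lam (qmul x z)) (lam (qmul (qstar a) y)) = Hip (lam z) (lam (qmul (qstar x) (qmul (qstar a) y)))).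
      rewrite Hip_sym, Hip_lam by (apply A0_mul; auto).
      rewrite (Hip_sym _ (lam z)), Hip_lam by auto.
      unfold ip. rewrite qstarM by auto. rewrite qmulA_xya by (apply A0_star; auto). reflexivity.
    + intros d [y [Hy ->]]. unfold wprod.
      rewrite pim_lam by auto.
      assert (A : is_adj Dm (adj Dm (pim a)) (lam (qmul x y)) (pim a (lam (qmul x y)))).
      { intros d' Hd'. rewrite adj_pim by auto.
        pose proof (pim_adj (qstar a) (lam (qmul x y)) (Dm_lam _ (A0_mul _ _ Hx Hy)) d' Hd') as P.
        rewrite qstarK in P. exact P. }
      rewrite (adj_eq HH Dm _ _ _ Dm_dense A).
      rewrite !pim_lam by (auto; apply A0_mul; auto). rewrite qmulA_axy by auto. reflexivity.
  - intros d [y [Hy ->]]. rewrite pim_lam by auto. rewrite (proj2 (Hu y)). reflexivity.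
Qed.

Lemma w_lam a : w a = Hip (lam a) (lam e).
Proof.
  destruct He as [He0 Hu]. rewrite Hip_lam by auto. unfold ip. rewrite estar by auto.
  rewrite (proj2 (Hu a)). reflexivity.
Qed.

Lemma gns_ii : exists (H : Hilbert) (D : H -> Prop) (pi : Q -> H -> H) (zeta : H),
       star_rep e D pi /\ D zeta /\ forall a, w a = inner (pi a zeta) zeta.
Proof.
  destruct He as [He0 Hu].
  exists HH, Dm, pim, (lam e). split; [apply pim_star_rep|split; [apply Dm_lam; auto|]].
  intro a. rewrite pim_lam by auto. rewrite (proj1 (Hu a)). apply w_lam.
Qed.

Lemma gns_iii : exists Omega : Q -> Q -> Cx, in_QA0 Omega /\ forall a, w a = Omega a e.
Proof.
  exists (fun a b => Hip (lam a) (lam b)). split; [|intro a; apply w_lam].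
  split; [split; [|split; [|split]]|split].
  - intros a b c. rewrite lam_add. apply Hip_Dl.
  - intros a b c. rewrite lam_add. exact (inner_add_r HH (lam a) (lam b) (lam c)).
  - intros k a b. rewrite lam_scal. apply Hip_Zl.
  - intros k a b. rewrite lam_scal. exact (inner_scal_r HH k (lam a) (lam b)).
  - intro a. apply Hip_pos.
  - intros a x y Hx Hy. rewrite Hip_lam by auto. rewrite Hip_sym, Hip_lam by auto.
    unfold ip. pose proof (H2 x y (qstar a) Hx Hy) as L. rewrite qstarK in L.
    rewrite !qmulA_xay in L by (auto; apply A0_star; auto). rewrite L. cxeq.
Qed.

Lemma gns_iv : exists p : Q -> R, hilbert_seminorm p /\
       forall (a x : Q), inA0 x ->
         Cabs (w (qmul (qstar a) x)) <= p a * sqrt (Re (w (qmul (qstar x) x))).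
Proof.
  exists (fun a => Hn (lam a)). split; [split; [|split; [|split]]|].
  - intro a. apply Hn_ge0.
  - intros a b. rewrite lam_add. apply Hn_tri.
  - intros k a. rewrite lam_scal. exact (ipnorm_scal HH k (lam a)).
  - intros a b. rewrite lam_add, lam_sub. exact (ipnorm_parallel HH (lam a) (lam b)).
  - intros a x Hx. fold (ip x a). rewrite (ip_sym a x Hx). rewrite Cabs_conj.
    rewrite <- (Hip_lam a x Hx).
    assert (E : sqrt (Re (w (qmul (qstar x) x))) = Hn (lam x)).
    { unfold Hn, ipnorm. rewrite Hip_lam by auto. reflexivity. }
    rewrite E. exact (CS HH (lam a) (lam x)).
Qed.

End V.


Theorem mainTheorem1 (Q : QStarAlg) (e : Q) (w : Q -> Cx) :
  is_unit e -> lin_functional w -> L1 w -> L2 w ->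
  (representable w <->
     exists (H : Hilbert) (D : H -> Prop) (pi : Q -> H -> H) (zeta : H),
       star_rep e D pi /\ D zeta /\ forall a, w a = inner (pi a zeta) zeta) /\
  (representable w <->
     exists Omega : Q -> Q -> Cx, in_QA0 Omega /\ forall a, w a = Omega a e) /\
  (representable w <->
     exists p : Q -> R, hilbert_seminorm p /\
       forall (a x : Q), inA0 x ->
         Cabs (w (qmul (qstar a) x)) <= p a * sqrt (Re (w (qmul (qstar x) x)))).
Proof.
  intros He Hw H1 H2.
  split; [|split]; split.
  - intros [_ [_ [_ H3]]]. eapply gns_ii; eauto.
  - intros [H [D [pi [zeta [R [Dz Hz]]]]]]. split; [auto|split; [auto|split; [auto|]]].
    eapply ii_L3; eauto.
  - intros [_ [_ [_ H3]]]. eapply gns_iii; eauto.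
  - intros [Om [HO HwO]]. split; [auto|split; [auto|split; [auto|]]].
    eapply iii_L3; eauto.
  - intros [_ [_ [_ H3]]]. eapply gns_iv; eauto.
  - intros [p [Hp Hb]]. split; [auto|split; [auto|split; [auto|]]].
    eapply iv_L3; eauto.
Qed.
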